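(* Consider an asynchronous execution of the Arrow protocol for a set of requests $R$ on a tree $T$ (extended by virtual broadcast messages), with requests indexed $r_0,r_1,\dots$ in the resulting queueing order, and let $r_i,r_j$ be requests with $i<j$. Then (1) $t_i-t_j\le d_T(v_i,v_j)$, and (2) if $i\ge1$, $t_i+\Delta(r_i,v_{i-1})\le t_j+d_T(v_{i-1},v_j)$.
   Context: Requests $r_i=(v_i,t_i)$ are issued at node $v_i$ at time $t_i\ge0$; $r_0=(v_0,0)$ is a dummy request; $d_T$ is weighted tree distance. Arrow protocol on $T$: each node $u$ has a pointer $\mathrm{link}(u)$ (itself or a neighbour), initially pointing towards $v_0$ with $\mathrm{link}(v_0)=v_0$. When $r$ is issued at $v$: if $\mathrm{link}(v)=v$, $r$ is queued behind the previous request at $v$; otherwise atomically $\mathrm{find}(r)$ (''find predecessor'') is sent to $\mathrm{link}(v)$ and $\mathrm{link}(v):=v$. When $u$ receives $\mathrm{find}(r)$ from $w$: if $\mathrm{link}(u)=u$, atomically $r$ is queued behind the last request issued at $u$ and $\mathrm{link}(u):=w$; otherwise it is atomically forwarded to $\mathrm{link}(u)$ and $\mathrm{link}(u):=w$. Asynchronous: each delay over edge $e$ is at most the weight $w(e)$. Virtual extension: the ''find predecessor'' message of each request is additionally broadcast to the whole tree by virtual messages not influencing the protocol; virtual messages over edge $e$ have delay exactly $w(e)$, and at simultaneous arrival real messages are processed first. $\Delta(r,u)$ is the time the ''find predecessor'' message of $r$ needs from its issue to reach node $u$. *)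

(* Defs.v *)
From HB Require Import structures.
From mathcomp Require Import all_boot all_order all_algebra.
Set Implicit Arguments. Unset Strict Implicit. Unset Printing Implicit Defensive.
Import Order.TTheory GRing.Theory Num.Theory.
Local Open Scope ring_scope.

Section ArrowDefs.
Variables (R : realFieldType) (V : finType).

Definition simple_path (adj : rel V) (u : V) (p : seq V) (v : V) : bool :=
  [&& path adj u p, last u p == v & uniq (u :: p)].

Definition is_tree (adj : rel V) : Prop :=
  forall u v : V, exists! p, simple_path adj u p v.

Fixpoint path_weight (w : V -> V -> R) (u : V) (p : seq V) : R :=
  if p is x :: p' then w u x + path_weight w x p' else 0.

Definition weighted_tree (adj : rel V) (w : V -> V -> R) : Prop :=
  [/\ forall u v, adj u v = adj v u,
      irreflexive adj,
      forall u v, adj u v -> 0 < w u v,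
      forall u v, adj u v -> w u v = w v u
    & is_tree adj].

Definition is_tree_dist (adj : rel V) (w : V -> V -> R) (d : V -> V -> R) : Prop :=
  forall u v p, simple_path adj u p v -> d u v = path_weight w u p.

(* requests are identified by natural numbers; request 0 is the dummy r_0 *)
Record astate := AState {
  link : V -> V;
  lastreq : V -> option nat;           (* last request issued at u (r_0 at v_0) *)
  predq : nat -> option nat;           (* queue predecessor found so far *)
  msgs : seq (nat * V * V * R)         (* in-flight find(r): (r, sender, receiver, send time) *)
}.

Inductive event :=
| Issue of nat
| Recv of nat & V & V & R.             (* find(r) from sender to receiver, sent at time s, is received *)

Definition upd {A : eqType} {B : Type} (f : A -> B) (a : A) (b : B) : A -> B :=
  fun x => if x == a then b else f x.

Inductive arrow_step (w : V -> V -> R) (rv : nat -> V) (rt : nat -> R) :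
    astate -> event * R -> astate -> Prop :=
| step_issue_local st r :
    link st (rv r) = rv r ->
    arrow_step w rv rt st (Issue r, rt r)
      (AState (link st) (upd (lastreq st) (rv r) (Some r))
              (upd (predq st) r (lastreq st (rv r))) (msgs st))
| step_issue_send st r :
    link st (rv r) <> rv r ->
    arrow_step w rv rt st (Issue r, rt r)
      (AState (upd (link st) (rv r) (rv r)) (upd (lastreq st) (rv r) (Some r))
              (predq st) ((r, rv r, link st (rv r), rt r) :: msgs st))
| step_recv_queue st r x u s tau :
    (r, x, u, s) \in msgs st -> s <= tau -> tau <= s + w x u ->
    link st u = u ->
    arrow_step w rv rt st (Recv r x u s, tau)
      (AState (upd (link st) u x) (lastreq st)
              (upd (predq st) r (lastreq st u)) (rem (r, x, u, s) (msgs st)))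
| step_recv_forward st r x u s tau :
    (r, x, u, s) \in msgs st -> s <= tau -> tau <= s + w x u ->
    link st u <> u ->
    arrow_step w rv rt st (Recv r x u s, tau)
      (AState (upd (link st) u x) (lastreq st) (predq st)
              ((r, u, link st u, tau) :: rem (r, x, u, s) (msgs st))).

Inductive arrow_run (w : V -> V -> R) (rv : nat -> V) (rt : nat -> R) :
    astate -> seq (event * R) -> astate -> Prop :=
| run_nil st : arrow_run w rv rt st [::] st
| run_cons st e st' tr st'' :
    arrow_step w rv rt st e st' -> arrow_run w rv rt st' tr st'' ->
    arrow_run w rv rt st (e :: tr) st''.

Definition is_issue_of (r : nat) (e : event * R) : bool :=
  if e.1 is Issue r' then r' == r else false.

(* initial pointers point towards v0 along the tree *)
Definition init_links (adj : rel V) (w d : V -> V -> R) (v0 : V) (link0 : V -> V) : Prop :=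
  link0 v0 = v0 /\
  forall u, u != v0 -> adj u (link0 u) /\ d u v0 = w u (link0 u) + d (link0 u) v0.

Definition init_state (v0 : V) (link0 : V -> V) : astate :=
  AState link0 (fun u => if u == v0 then Some 0%N else None) (fun _ => None) [::].

Definition arrow_execution (adj : rel V) (w d : V -> V -> R) (v0 : V)
    (link0 : V -> V) (n : nat) (rv : nat -> V) (rt : nat -> R)
    (tr : seq (event * R)) (stf : astate) : Prop :=
  [/\ rv 0%N = v0 /\ rt 0%N = 0,
      forall r, (0 < r <= n)%N -> 0 <= rt r,
      init_links adj w d v0 link0,
      arrow_run w rv rt (init_state v0 link0) tr stf
    & [/\ sorted <=%R (map snd tr),
           forall r, count (is_issue_of r) tr = (0 < r <= n)%N
         & msgs stf = [::]]].

(* The find message of r is at node rv r at time rt r and at node x at every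
   receive time tau of the real message; from each such point, virtual copies
   spread over the tree with delay exactly w(e), reaching u after d x u more.
   The arrival time at u is the earliest of these. *)
Definition reach_time (d : V -> V -> R) (rv : nat -> V) (rt : nat -> R)
    (tr : seq (event * R)) (r : nat) (u : V) : R :=
  foldr (fun e m => match e with
                    | (Recv r' _ x _, tau) => if r' == r then Num.min (tau + d x u) m else m
                    | _ => m end)
        (rt r + d (rv r) u) tr.

Definition Delta d rv rt tr r u : R := reach_time d rv rt tr r u - rt r.

(** * Queueing order: q k is the k-th request in the resulting queue *)
Definition queue_order (n : nat) (stf : astate) (q : nat -> nat) : Prop :=
  [/\ q 0%N = 0%N,
      forall k, (k < n)%N -> predq stf (q k.+1) = Some (q k),
      forall k, (k <= n)%N -> (q k <= n)%N
    & forall k l, (k <= n)%N -> (l <= n)%N -> q k = q l -> k = l].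

End ArrowDefs.

(* Main.v *)
Require Import Defs.
From HB Require Import structures.
From mathcomp Require Import all_boot all_order all_algebra.
From mathcomp Require Import zify ring lra.
From Stdlib Require Import Classical.
Set Implicit Arguments. Unset Strict Implicit. Unset Printing Implicit Defensive.
Import Order.TTheory GRing.Theory Num.Theory.

Section Iter.
Variable T : eqType.

Lemma iter_agree (f g : T -> T) z u k :
  (forall x, x != z -> g x = f x) ->
  (forall i, i < k -> iter i f u != z) -> iter k g u = iter k f u.
Proof.
move=> hg; elim: k => [|k IH] hk //=.
rewrite IH; last by move=> i hi; apply: hk; lia.
by rewrite hg //; apply: hk.
Qed.

Lemma iter_shift (f : T -> T) i j u t :
  iter i f u = iter j f u -> iter (i + t) f u = iter (j + t) f u.
Proof. by move=> h; rewrite addnC iterD h -iterD addnC. Qed.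

End Iter.

Section FinIter.
Variable V : finType.

Lemma sink_bound (f : V -> V) u :
  (exists k, f (iter k f u) = iter k f u) -> f (iter #|V| f u) = iter #|V| f u.
Proof.
move=> ex.
have exP : exists k, f (iter k f u) == iter k f u by case: ex => k hk; exists k; apply/eqP.
case: (ex_minnP exP) => k /eqP hk hmin.
have hnl : ~~ looping f u k.
  apply/trajectP => -[i hi /esym hik].
  have : f (iter i f u) == iter i f u by rewrite hik; apply/eqP.
  by move=> /hmin; lia.
have hu := hnl; rewrite -looping_uniq in hu.
have hle : k.+1 <= #|V|.
  by rewrite -(size_traject f u k.+1) -(card_uniqP hu) max_card.
have -> : #|V| = (#|V| - k) + k by lia.
by rewrite iterD iter_fix // iter_fix.
Qed.

Definition LAf (f : V -> V) := forall u, f (iter #|V| f u) = iter #|V| f u.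

Lemma iter_fix_big (f : V -> V) u m : LAf f -> #|V| <= m -> iter m f u = iter #|V| f u.
Proof.
move=> hLA hm; have -> : m = (m - #|V|) + #|V| by lia.
by rewrite iterD iter_fix.
Qed.

Lemma sinkOf_shift (f : V -> V) k u : LAf f -> iter #|V| f (iter k f u) = iter #|V| f u.
Proof.
move=> hLA; rewrite -iterD addnC iterD iter_fix //.
Qed.

Lemma no_return (f : V -> V) b k : LAf f -> f b != b -> iter k f (f b) != b.
Proof.
move=> hLA hb; apply/negP => /eqP hk.
have hper : forall m, iter (m * k.+1) f b = b.
  elim=> [|m IH] //.
  by rewrite mulSn iterD IH iterSr.
have := hper #|V|.
rewrite (iter_fix_big _ hLA); last by rewrite leq_pmulr.
move=> hs; move: (hLA b); rewrite hs => hb'.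
by rewrite hb' eqxx in hb.
Qed.

End FinIter.

Section OIter.
Implicit Types (f g : nat -> option nat).

Definition iterO f k z := iter k (obind f) (Some z).
Definition acyc f := forall z, exists k, iterO f k z = None.
Definition reachO f z z' := exists k, iterO f k z = Some z'.

Lemma iterO0 f z : iterO f 0 z = Some z. Proof. by []. Qed.

Lemma iterOS f k z : iterO f k.+1 z = obind f (iterO f k z).
Proof. by []. Qed.

Lemma iter_obind_None f k : iter k (obind f) None = None.
Proof. by elim: k => //= k ->. Qed.

Lemma iterOSr f k z :
  iterO f k.+1 z = if f z is Some z1 then iterO f k z1 else None.
Proof.
rewrite /iterO iterSr /=; case: (f z) => // ; exact: iter_obind_None.
Qed.

Lemma iterOD f i j z :
  iterO f (i + j) z = if iterO f j z is Some y then iterO f i y else None.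
Proof.
rewrite /iterO iterD; case: (iter j (obind f) (Some z)) => //.
exact: iter_obind_None.
Qed.

Lemma iterO_None_le f i j z : iterO f i z = None -> i <= j -> iterO f j z = None.
Proof.
move=> hi hij; have -> : j = (j - i) + i by lia.
by rewrite iterOD hi.
Qed.

Lemma reachO_refl f z : reachO f z z. Proof. by exists 0. Qed.

Lemma reachO_edge f z z' : f z = Some z' -> reachO f z z'.
Proof. by move=> h; exists 1. Qed.

Lemma reachO_trans f x y z : reachO f x y -> reachO f y z -> reachO f x z.
Proof.
move=> [i hi] [j hj]; exists (j + i); by rewrite iterOD hi.
Qed.

Lemma reachO_step f x y z : f x = Some y -> reachO f y z -> reachO f x z.
Proof. by move=> h; apply: reachO_trans; apply: reachO_edge. Qed.

Lemma cycle_false f x z i j :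
  acyc f -> iterO f i x = Some z -> iterO f j x = Some z -> i < j -> False.
Proof.
move=> hac hi hj hij.
have hsh : forall t, iterO f (j + t) x = iterO f (i + t) x.
  by move=> t; rewrite !(addnC _ t) !iterOD hi hj.
have hall : forall t, iterO f (i + t) x != None.
  elim/ltn_ind => t IH.
  case: (ltnP t (j - i)) => ht.
    apply/eqP => hn.
    have hle : i + t <= j by lia.
    by have := iterO_None_le hn hle; rewrite hj.
  have -> : i + t = j + (t - (j - i)) by lia.
  rewrite hsh; apply: IH; lia.
case: (hac x) => k hk.
case: (leqP i k) => hik.
  have := hall (k - i); rewrite subnKC // hk; by [].
have := iterO_None_le hk (ltnW hik); rewrite hi; by [].
Qed.

Lemma iterO_agree f g x k :
  (forall i y, i < k -> iterO f i x = Some y -> g y = f y) ->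
  iterO g k x = iterO f k x.
Proof.
elim: k => [|k IH] h //.
rewrite !iterOS IH; last by move=> i y hi; apply: h; lia.
case e: (iterO f k x) => [y|] //=.
by rewrite (h k y).
Qed.

Lemma acyc_preserve f g (P : nat -> Prop) :
  acyc f -> (forall z, g z = f z \/ P z) ->
  (forall p, P p -> exists k, iterO g k p = None) -> acyc g.
Proof.
move=> hf hgf hP x.
case: (hf x) => k; elim: k x => [|k IH] x hk //.
case: (hgf x) => [hgx|/hP] //.
rewrite iterOSr in hk.
case e: (f x) => [x1|].
  rewrite e in hk; case: (IH _ hk) => k' hk'.
  by exists k'.+1; rewrite iterOSr hgx e.
by exists 1; rewrite iterOSr hgx e.
Qed.

End OIter.

Section IT.
Variables (f g : nat -> option nat) (r : nat) (OV : option nat).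
Hypothesis hA : forall z, z != r -> g z = f z \/ (f z = OV /\ g z = Some r).
Hypothesis hfr : f r = None.
Hypothesis hgr : g r = OV.
Hypothesis hfresh : forall z, f z != Some r.
Hypothesis hOV : OV != Some r.
Hypothesis hac : acyc f.

Lemma IT_T z z' : f z = Some z' -> reachO g z z'.
Proof.
move=> hz; case: (z =P r) => [e|ne]; first by rewrite e hfr in hz.
case: (hA (introN eqP ne)) => [e|[e1 e2]]; first by apply: reachO_edge; rewrite e.
apply: (reachO_step e2); apply: reachO_edge; by rewrite hgr -e1.
Qed.

Lemma IT_reach z z' : reachO f z z' -> reachO g z z'.
Proof.
case=> k; elim: k z' => [|k IH] z' hk.
  by move: hk; rewrite iterO0 => -[<-]; apply: reachO_refl.
move: hk; rewrite iterOS; case e: (iterO f k z) => [y|] //= hy.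
apply: reachO_trans (IH _ e) (IT_T hy).
Qed.

Lemma IT_EA : acyc g.
Proof.
have hterm_o : forall o, OV = Some o -> exists k, iterO g k o = None.
  move=> o ho; case: (hac o) => k hk; exists k; rewrite -hk; apply: iterO_agree => i y _ hi.
  have hyr : y != r.
    case: i hi => [|i]; first by rewrite iterO0 => -[<-]; apply/eqP => e; move: hOV; rewrite ho e eqxx.
    rewrite iterOS; case e: (iterO f i o) => [y0|] //= hy.
    by apply/eqP => er; move: (hfresh y0); rewrite hy er eqxx.
  case: (hA hyr) => [//|[e1 e2]].
  exfalso; apply: (@cycle_false f o o 0 i.+1) => //.
  by rewrite iterOS hi /= e1 ho.
have hterm_r : exists k, iterO g k r = None.
  case e: OV => [o|]; last by exists 1; rewrite iterOSr hgr e.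
  case: (hterm_o o e) => k hk; exists k.+1; by rewrite iterOSr hgr e.
apply: (@acyc_preserve f g (fun z => z = r \/ g z = Some r)) => //.
  move=> z; case: (z =P r) => [e|ne]; first by right; left.
  case: (hA (introN eqP ne)) => [e|[_ e]]; [by left|by right; right].
move=> p [->|hp] //.
case: hterm_r => k hk; exists k.+1; by rewrite iterOSr hp.
Qed.

End IT.

Section RT.
Variables (f g : nat -> option nat) (y La : nat) (OV : option nat).
Hypothesis hA : forall z, z != y -> g z = f z \/ (f z = OV /\ g z = Some La).
Hypothesis hgy : g y = f y.
Hypothesis hfy : f y = OV.
Hypothesis hreach : reachO f La y.
Hypothesis hac : acyc f.

Lemma RT_path : reachO g La y.
Proof.
case: hreach => m hm; exists m; rewrite -hm; apply: iterO_agree => i z him hi.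
case: (z =P y) => [->//|ne].
case: (hA (introN eqP ne)) => [//|[e1 e2]]; exfalso.
case eo: OV => [o|].
  apply: (@cycle_false f La o i.+1 m.+1) => //; first by rewrite iterOS hi /= e1 eo.
  by rewrite iterOS hm /= hfy eo.
have : iterO f i.+1 La = None by rewrite iterOS hi /= e1 eo.
by move/iterO_None_le => /(_ m him); rewrite hm.
Qed.

Lemma RT_T z z' : f z = Some z' -> reachO g z z'.
Proof.
move=> hz; case: (z =P y) => [e|ne]; first by apply: reachO_edge; rewrite e hgy -e.
case: (hA (introN eqP ne)) => [e|[e1 e2]]; first by apply: reachO_edge; rewrite e.
apply: (reachO_step e2); apply: reachO_trans RT_path _; apply: reachO_edge.
by rewrite hgy hfy -e1.
Qed.

Lemma RT_reach z z' : reachO f z z' -> reachO g z z'.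
Proof.
case=> k; elim: k z' => [|k IH] z' hk.
  by move: hk; rewrite iterO0 => -[<-]; apply: reachO_refl.
move: hk; rewrite iterOS; case e: (iterO f k z) => [y0|] //= hy.
apply: reachO_trans (IH _ e) (RT_T hy).
Qed.

Lemma RT_EA : acyc g.
Proof.
have hterm_y : exists k, iterO g k y = None.
  case: (hac y) => k hk; exists k; rewrite -hk; apply: iterO_agree => i z _ hi.
  case: (z =P y) => [->//|ne].
  case: (hA (introN eqP ne)) => [//|[e1 e2]]; exfalso.
  case: i hi => [|i] hi; first by move: hi ne; rewrite iterO0 => -[->] h; exact: h.
  case eo: OV => [o|].
    apply: (@cycle_false f y o 1 i.+2) => //; first by rewrite iterOS iterO0 /= hfy eo.
    by rewrite iterOS hi /= e1 eo.
  have : iterO f 1 y = None by rewrite iterOS iterO0 /= hfy eo.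
  by move/iterO_None_le => /(_ i.+1 isT); rewrite hi.
have hterm_La : exists k, iterO g k La = None.
  case: RT_path => m hm; case: hterm_y => k hk; exists (k + m); by rewrite iterOD hm.
apply: (@acyc_preserve f g (fun z => g z = Some La)) => //.
  move=> z; case: (z =P y) => [->|ne]; first by left.
  case: (hA (introN eqP ne)) => [e|[_ e]]; [by left|by right].
move=> p hp; case: hterm_La => k hk; exists k.+1; by rewrite iterOSr hp.
Qed.

End RT.

Section Tree.
Variable V : finType.
Variable adj : rel V.
Hypothesis htree : is_tree adj.
Hypothesis hirr : irreflexive adj.

Lemma tree_adj_path a b p : adj a b -> simple_path adj a p b -> p = [:: b].
Proof.
move=> hab hp.
have hb : simple_path adj a [:: b] b.
  rewrite /simple_path /= hab eqxx /= andbT inE.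
  apply/negP => /eqP eab; by rewrite eab hirr in hab.
case: (htree a b) => p0 [_ hu].
by rewrite -(hu _ hp) (hu _ hb).
Qed.

Lemma traject_path (f : V -> V) x n :
  (forall y, f y != y -> adj y (f y)) ->
  uniq (traject f x n.+1) -> path adj x (traject f (f x) n).
Proof.
move=> hT1; elim: n x => [|n IH] x //.
rewrite trajectS => /andP [hx hu].
rewrite trajectS /=; apply/andP; split; last exact: IH.
apply: hT1; apply/eqP => efx.
by move: hx; rewrite trajectS inE efx eqxx.
Qed.

Lemma walk_simple (f : V -> V) a b m :
  (forall y, f y != y -> adj y (f y)) ->
  iter m f a = b -> (forall i, i < m -> iter i f a != b) ->
  simple_path adj a (traject f (f a) m) b.
Proof.
move=> hT1 hm hmin.
have hnl : ~~ looping f a m.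
  apply/trajectP => -[i hi hik].
  by move: (hmin i hi); rewrite -hik hm eqxx.
have hu : uniq (traject f a m.+1) by rewrite looping_uniq.
rewrite /simple_path -trajectS hu last_traject hm eqxx /= !andbT.
exact: traject_path.
Qed.

Lemma sa_core (f : V -> V) a b :
  (forall y, f y != y -> adj y (f y)) ->
  adj a b -> f a != b -> forall k, iter k f a != b.
Proof.
move=> hT1 hab hfa k; apply/negP => /eqP hk.
have exP : exists k, iter k f a == b by exists k; apply/eqP.
case: (ex_minnP exP) => m /eqP hm hmin.
have hmin' : forall i, i < m -> iter i f a != b.
  move=> i hi; apply/negP => /hmin; lia.
have := tree_adj_path hab (walk_simple hT1 hm hmin').
case: m hm {hmin hmin'} => [|[|m]] hm /=.
- by move=> _; rewrite /= in hm; rewrite hm hirr in hab.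
- by case=> efa; rewrite efa eqxx in hfa.
- by [].
Qed.

Variables (R : realFieldType) (w d : V -> V -> R) (v0 : V) (link0 : V -> V).
Local Open Scope ring_scope.
Hypothesis hwpos : forall u v, adj u v -> 0 < w u v.
Hypothesis hinit : init_links adj w d v0 link0.

Lemma link0_T1 y : link0 y != y -> adj y (link0 y).
Proof.
case: hinit => h0 h; move=> hy.
have : y != v0 by apply/eqP => e; rewrite e h0 eqxx in hy.
by move/h => [].
Qed.

Lemma link0_sink y : link0 y = y -> y = v0.
Proof.
move=> hy; case: hinit => h0 h; apply/eqP; apply/negPn/negP => hne.
case: (h y hne) => ha _; by rewrite hy hirr in ha.
Qed.

Lemma link0_dec y : y != v0 -> d (link0 y) v0 < d y v0.
Proof.
case: hinit => h0 h hy; case: (h y hy) => ha hd.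
rewrite hd; have := hwpos ha; lra.
Qed.

Lemma link0_reach u : exists k, iter k link0 u = v0.
Proof.
case hh: (has (fun k => iter k link0 u == v0) (iota 0 #|V|.+1)).
  by case/hasP: hh => k _ /eqP hk; exists k.
have hne : forall k, (k <= #|V|)%N -> iter k link0 u != v0.
  move=> k hk; apply/negP => hk'; move/negbT: hh => /hasPn /(_ k).
  by rewrite mem_iota /= add0n ltnS hk hk' => /(_ isT).
have hdec : forall i j, (i < j)%N -> (j <= #|V|)%N -> d (iter j link0 u) v0 < d (iter i link0 u) v0.
  move=> i j; elim: j => [|j IH] hij hjV //.
  have hj : iter j link0 u != v0 by apply: hne; lia.
  rewrite /= ; case: (ltnP i j) => hi.
    by apply: lt_trans (link0_dec hj) (IH hi _); lia.
  have -> : i = j by lia.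
  exact: link0_dec.
have hnl : ~~ looping link0 u #|V|.
  apply/trajectP => -[i hi hik].
  by have := hdec _ _ hi (leqnn _); rewrite -hik ltxx.
have hu := hnl; rewrite -looping_uniq in hu.
have := card_uniqP hu; rewrite size_traject => hc.
by have := max_card (mem (traject link0 u #|V|.+1)); rewrite hc ltnn.
Qed.

Lemma link0_LA : LAf link0.
Proof.
move=> u; apply: sink_bound.
case: (link0_reach u) => k hk; exists k; rewrite hk; by case: hinit.
Qed.

Hypothesis hsym : forall u v, adj u v = adj v u.

Lemma link0_chain x : exists k, simple_path adj x (traject link0 (link0 x) k) v0
   /\ iter k link0 x = v0.
Proof.
have exP : exists k, iter k link0 x == v0 by case: (link0_reach x) => k hk; exists k; apply/eqP.
case: (ex_minnP exP) => m /eqP hm hmin.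
exists m; split => //; apply: walk_simple => //; first exact: link0_T1.
move=> i hi; apply/negP => /hmin; lia.
Qed.

Lemma link0_T5 p u : adj p u -> link0 u = p \/ link0 p = u.
Proof.
move=> hpu.
have hup : adj u p by rewrite hsym.
case: (link0 u =P p) => hu'; first by left.
case: (link0 p =P u) => hp'; first by right.
have hnu := sa_core link0_T1 hup (introN eqP hu').
have hnp := sa_core link0_T1 hpu (introN eqP hp').
case: (link0_chain u) => ku [spu hku].
case: (link0_chain p) => kp [spp hkp].
have hpv0 : p != v0 by rewrite -hku eq_sym hnu.
have sp2 : simple_path adj p (u :: traject link0 (link0 u) ku) v0.
  move: spu; rewrite /simple_path => /and3P [h1 h2 h3].
  apply/and3P; split; first by rewrite /= hpu h1.
    by [].
  rewrite cons_uniq h3 andbT -trajectS.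
  apply/trajectP => -[i _ hi]; by move: (hnu i); rewrite -hi eqxx.
case: (htree p v0) => p0 [_ hun].
have e : traject link0 (link0 p) kp = u :: traject link0 (link0 u) ku.
  by rewrite -(hun _ spp) (hun _ sp2).
case: kp e {spp hkp} => [|kp] //.
by rewrite trajectS => -[].
Qed.

End Tree.

Section Proto.
Variables (R : realFieldType) (V : finType) (adj : rel V) (w : V -> V -> R)
  (rv : nat -> V) (rt : nat -> R).
Hypothesis hsym : forall u v, adj u v = adj v u.
Hypothesis hirr : irreflexive adj.
Hypothesis htree : is_tree adj.

Notation ast := (astate R V).
Notation msg := (nat * V * V * R)%type.
Notation ev := (event R V * R)%type.

Definition req (m : msg) := m.1.1.1.
Definition sndr (m : msg) := m.1.1.2.
Definition rcvr (m : msg) := m.1.2.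
Definition stm (m : msg) := m.2.

Definition sinkOf (s : ast) u := iter #|V| (link s) u.
Definition tl (s : ast) u := lastreq s (sinkOf s u).
Definition mtarget (s : ast) z := ohead [seq rcvr m | m <- msgs s & req m == z].
Definition Ef (s : ast) z :=
  if predq s z is Some p then Some p else
  if mtarget s z is Some b then tl s b else None.
Definition issued (pre : seq ev) y := has (is_issue_of y) pre.
Definition same_edge (m : msg) p u :=
  ((sndr m == p) && (rcvr m == u)) || ((sndr m == u) && (rcvr m == p)).

Definition T1p (s : ast) := forall u, link s u != u -> adj u (link s u).
Definition T2p (s : ast) := forall u, link s u != u -> link s (link s u) != u.
Definition T3p (s : ast) := forall m, m \in msgs s ->
  [/\ adj (sndr m) (rcvr m), link s (sndr m) != rcvr m & link s (rcvr m) != sndr m].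
Definition T4ep (s : ast) := forall m m', m \in msgs s -> m' \in msgs s -> m != m' ->
  ~~ same_edge m' (sndr m) (rcvr m).
Definition T5p (s : ast) := forall p u, adj p u ->
  [\/ link s u = p, link s p = u | exists2 m, m \in msgs s & same_edge m p u].
Definition R1p pre (s : ast) := forall m, m \in msgs s -> issued pre (req m) /\ predq s (req m) = None.
Definition R2p pre (s : ast) := forall y z, predq s y = Some z -> issued pre y /\ (z = 0 \/ issued pre z).
Definition R3p pre (s : ast) := forall u x, lastreq s u = Some x -> rv x = u /\ (x = 0 \/ issued pre x).
Definition TMp (pre : seq ev) (s : ast) := forall m, m \in msgs s -> has (fun e : ev => e.2 == stm m) pre.
Definition F3p (s : ast) := forall m, m \in msgs s ->
  exists L, tl s (sndr m) = Some L /\ reachO (Ef s) L (req m).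

Record SInv (pre : seq ev) (s : ast) : Prop := {
  sT1 : T1p s; sT2 : T2p s; sT3 : T3p s; sT4u : uniq (map req (msgs s)); sT4e : T4ep s;
  sT5 : T5p s; sR1 : R1p pre s; sR2 : R2p pre s; sR3 : R3p pre s; sLA : LAf (link s);
  sTM : TMp pre s }.

Record Inv (pre : seq ev) (s : ast) : Prop := {
  iS : SInv pre s; iEA : acyc (Ef s); iF3 : F3p s }.

Definition StepHyp (pre : seq ev) (e : ev) :=
  forall r, e.1 = @Issue R V r -> r != 0 /\ ~~ issued pre r.

Lemma issued_rcons pre e y : issued (rcons pre e) y = issued pre y || is_issue_of y e.
Proof. by rewrite /issued has_rcons orbC. Qed.

Lemma upd_eq (A : eqType) B (f : A -> B) a b : upd f a b a = b.
Proof. by rewrite /upd eqxx. Qed.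

Lemma upd_neq (A : eqType) B (f : A -> B) a b x : x != a -> upd f a b x = f x.
Proof. by rewrite /upd => /negbTE ->. Qed.

Lemma adj_neq u v : adj u v -> u != v.
Proof. by move=> h; apply/eqP => e; rewrite e hirr in h. Qed.

Lemma same_edge_sym m p u : same_edge m p u = same_edge m u p.
Proof. by rewrite /same_edge orbC. Qed.

Lemma same_edge_swap m m' : same_edge m' (sndr m) (rcvr m) = same_edge m (sndr m') (rcvr m').
Proof.
rewrite /same_edge; apply/idP/idP; case/orP => /andP [/eqP -> /eqP ->]; by rewrite !eqxx ?orbT.
Qed.

Lemma uniq_msgs (s : ast) : uniq (map req (msgs s)) -> uniq (msgs s).
Proof. exact: map_uniq. Qed.

Lemma mem_rem_neq (T : eqType) (x y : T) s : uniq s -> x \in s -> x != y -> x \in rem y s.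
Proof. by move=> hu hx hxy; rewrite (mem_rem_uniq _ hu) inE hxy. Qed.

Lemma mem_rem_sub (T : eqType) (x y : T) s : x \in rem y s -> x \in s.
Proof. exact: mem_rem. Qed.

Lemma mem_rem_uniq_neq (T : eqType) (x y : T) s : uniq s -> x \in rem y s -> x != y.
Proof. by move=> hu; rewrite (mem_rem_uniq _ hu) inE => /andP []. Qed.

Lemma mtarget_cons (m : msg) ms z :
  ohead [seq rcvr m' | m' <- m :: ms & req m' == z] =
  if req m == z then Some (rcvr m) else ohead [seq rcvr m' | m' <- ms & req m' == z].
Proof. by rewrite /=; case: ifP. Qed.

Lemma mtarget_mem_gen (ms : seq msg) m : uniq (map req ms) -> m \in ms ->
  ohead [seq rcvr m' | m' <- ms & req m' == req m] = Some (rcvr m).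
Proof.
elim: ms => [|m1 ms IH] //= /andP [hn hu]; rewrite inE => /orP [/eqP ->|hm].
  by rewrite eqxx.
case: ifP => [/eqP e|_]; last exact: IH.
by move: hn; rewrite e => /negP []; apply/mapP; exists m.
Qed.

Lemma mtarget_none_gen (ms : seq msg) z : (forall m, m \in ms -> req m != z) ->
  ohead [seq rcvr m' | m' <- ms & req m' == z] = None.
Proof.
elim: ms => [|m1 ms IH] //= h.
rewrite (negbTE (h m1 (mem_head _ _))); apply: IH => m hm; apply: h; by rewrite inE hm orbT.
Qed.

Lemma mtarget_some_gen (ms : seq msg) z b :
  ohead [seq rcvr m' | m' <- ms & req m' == z] = Some b ->
  exists2 m, m \in ms & req m = z /\ rcvr m = b.
Proof.
elim: ms => [|m1 ms IH] //=; case: ifP => [/eqP e [<-]|_ /IH [m hm hh]].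
  by exists m1; rewrite ?mem_head.
by exists m => //; rewrite inE hm orbT.
Qed.

Lemma mtarget_rem_gen (ms : seq msg) m0 z : uniq (map req ms) -> m0 \in ms -> z != req m0 ->
  ohead [seq rcvr m' | m' <- rem m0 ms & req m' == z] = ohead [seq rcvr m' | m' <- ms & req m' == z].
Proof.
elim: ms => [|m1 ms IH] //= /andP [hn hu] hm0 hz.
case: (m1 =P m0) => [e|ne].
  by rewrite e (negbTE (_ : req m0 != z)) // eq_sym.
have hne : (m1 == m0) = false by apply/eqP.
rewrite /=; case: ifP => // _; apply: IH => //.
by move: hm0; rewrite inE => /orP [/eqP e|//]; rewrite e in ne.
Qed.

Lemma hit_min (f : V -> V) u z : (exists k, iter k f u = z) ->
  exists k, iter k f u = z /\ forall i, i < k -> iter i f u != z.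
Proof.
move=> ex; have exP : exists k, iter k f u == z by case: ex => k hk; exists k; apply/eqP.
case: (ex_minnP exP) => k /eqP hk hmin; exists k; split => // i hi.
by apply/negP => /hmin; lia.
Qed.

Lemma iter_upd_agree (f : V -> V) b a u k :
  (forall i, i < k -> iter i f u != b) -> iter k (upd f b a) u = iter k f u.
Proof. apply: iter_agree => x hx; exact: upd_neq. Qed.

Lemma LA_upd (f : V -> V) a b : LAf f -> (forall k, iter k f a != b) -> LAf (upd f b a).
Proof.
move=> hLA ha u; apply: sink_bound.
case: (classic (exists k, iter k f u = b)) => [hb|hnb].
  case: (hit_min hb) => k [hk hmin].
  have e1 : iter k (upd f b a) u = b by rewrite iter_upd_agree.
  have e2 : iter #|V| (upd f b a) a = iter #|V| f a by rewrite iter_upd_agree.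
  exists (#|V| + k.+1); rewrite iterD iterS e1 upd_eq e2 upd_neq ?hLA //.
exists #|V|.
have hn : forall i, iter i f u != b by move=> i; apply/eqP => e; apply: hnb; exists i.
rewrite iter_upd_agree // upd_neq ?hLA //.
Qed.

Lemma LA_upd_self (f : V -> V) v : LAf f -> LAf (upd f v v).
Proof.
move=> hLA u; apply: sink_bound.
case: (classic (exists k, iter k f u = v)) => [hb|hnb].
  case: (hit_min hb) => k [hk hmin].
  exists k; by rewrite iter_upd_agree // hk upd_eq.
exists #|V|.
have hn : forall i, iter i f u != v by move=> i; apply/eqP => e; apply: hnb; exists i.
rewrite iter_upd_agree // upd_neq ?hLA //.
Qed.

Lemma SA pre s m : SInv pre s -> m \in msgs s -> forall k, iter k (link s) (sndr m) != rcvr m.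
Proof.
move=> hI hm; case: (sT3 hI hm) => hadj h1 _.
exact: (sa_core htree hirr (sT1 hI) hadj h1).
Qed.

Lemma step_T1 pre s e s' : SInv pre s -> arrow_step w rv rt s e s' -> T1p s'.
Proof.
move=> hI hst; case: hst hI => [s0 r hl|s0 r hl|s0 r x u sg tau hm h1 h2 hl|s0 r x u sg tau hm h1 h2 hl] hI /=.
- exact: sT1 hI.
- move=> y /=; case: (y =P rv r) => [->|ne]; first by rewrite upd_eq eqxx.
  rewrite upd_neq; [move=> hh; exact: (sT1 hI hh)|exact/eqP].
- move=> y /=; case: (y =P u) => [->|ne].
    rewrite upd_eq hsym => _; by case: (sT3 hI hm).
  rewrite upd_neq; [move=> hh; exact: (sT1 hI hh)|exact/eqP].
- move=> y /=; case: (y =P u) => [->|ne].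
    rewrite upd_eq hsym => _; by case: (sT3 hI hm).
  rewrite upd_neq; [move=> hh; exact: (sT1 hI hh)|exact/eqP].
Qed.

Lemma uniq_map_eq (A B : eqType) (f : A -> B) (sq : seq A) x y :
  uniq (map f sq) -> x \in sq -> y \in sq -> f x = f y -> x = y.
Proof.
elim: sq => [|z sq IH] //= /andP [hn hu]; rewrite !inE.
case/orP => [/eqP ->|hx]; case/orP => [/eqP ->|hy] //.
- by move=> e; move: hn; rewrite e => /negP []; apply: map_f.
- by move=> e; move: hn; rewrite -e => /negP []; apply: map_f.
- exact: IH.
Qed.

Lemma not_same_edge_link (s : ast) a b m : T3p s -> link s a = b -> m \in msgs s -> ~~ same_edge m a b.
Proof.
move=> hT3 hab hm; case: (hT3 m hm) => _ h1 h2; rewrite /same_edge.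
apply/negP => /orP [/andP [/eqP e1 /eqP e2]|/andP [/eqP e1 /eqP e2]].
  by rewrite e1 e2 hab eqxx in h1.
by rewrite e1 e2 hab eqxx in h2.
Qed.

Lemma issued_mono pre e y : issued pre y -> issued (rcons pre e) y.
Proof. by rewrite issued_rcons => ->. Qed.

Lemma step_T2 pre s e s' : SInv pre s -> arrow_step w rv rt s e s' -> T2p s'.
Proof.
move=> hI hst; case: hst hI => [s0 r hl|s0 r hl|s0 r x u sg tau hm h1 h2 hl|s0 r x u sg tau hm h1 h2 hl] hI /=.
- move=> y hy; exact: (sT2 hI hy).
- move=> y /=; case: (y =P rv r) => [->|ne]; first by rewrite upd_eq eqxx.
  rewrite (upd_neq _ _ (introN eqP ne)) => hy.
  case: (link s0 y =P rv r) => [->|ne2]; first by rewrite upd_eq eq_sym; apply/eqP.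
  rewrite upd_neq; [exact: (sT2 hI hy)|exact/eqP].
- have [hadj hx hu] : [/\ adj x u, link s0 x != u & link s0 u != x] by exact: (sT3 hI hm).
  move=> y /=; case: (y =P u) => [->|ne].
    rewrite upd_eq => _; rewrite upd_neq //; exact: adj_neq.
  rewrite (upd_neq _ _ (introN eqP ne)) => hy.
  case: (link s0 y =P u) => [ey|ne2].
    rewrite ey upd_eq; apply/eqP => exy; by rewrite exy ey eqxx in hx.
  rewrite upd_neq; [exact: (sT2 hI hy)|exact/eqP].
- have [hadj hx hu] : [/\ adj x u, link s0 x != u & link s0 u != x] by exact: (sT3 hI hm).
  move=> y /=; case: (y =P u) => [->|ne].
    rewrite upd_eq => _; rewrite upd_neq //; exact: adj_neq.
  rewrite (upd_neq _ _ (introN eqP ne)) => hy.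
  case: (link s0 y =P u) => [ey|ne2].
    rewrite ey upd_eq; apply/eqP => exy; by rewrite exy ey eqxx in hx.
  rewrite upd_neq; [exact: (sT2 hI hy)|exact/eqP].
Qed.

Lemma step_T3 pre s e s' : SInv pre s -> arrow_step w rv rt s e s' -> T3p s'.
Proof.
move=> hI hst; case: hst hI => [s0 r hl|s0 r hl|s0 r x u sg tau hm h1 h2 hl|s0 r x u sg tau hm h1 h2 hl] hI /=.
- exact: sT3 hI.
- move=> m /=; rewrite inE => /orP [/eqP ->|hm].
    have hl' : link s0 (rv r) != rv r by apply/eqP.
    change [/\ adj (rv r) (link s0 (rv r)), upd (link s0) (rv r) (rv r) (rv r) != link s0 (rv r)
       & upd (link s0) (rv r) (rv r) (link s0 (rv r)) != rv r].
    rewrite upd_eq upd_neq; last by [].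
    split; [exact: (sT1 hI hl')|by rewrite eq_sym|exact: (sT2 hI hl')].
  case: (sT3 hI hm) => hadj ha hb; split => //.
    case: (sndr m =P rv r) => [ee|ne]; first by rewrite ee upd_eq -ee; exact: adj_neq.
    by rewrite upd_neq //; apply/eqP.
  case: (rcvr m =P rv r) => [ee|ne]; first by rewrite ee upd_eq -ee eq_sym; exact: adj_neq.
  by rewrite upd_neq //; apply/eqP.
- have hu0 := uniq_msgs (sT4u hI).
  move=> m /= hmr; have hm' := mem_rem hmr; have hne := mem_rem_uniq_neq hu0 hmr.
  have hse := sT4e hI hm hm' (_ : (r, x, u, sg) != m); rewrite eq_sym in hse; have {}hse := hse hne.
  case: (sT3 hI hm') => hadj ha hb; split => //.
    case: (sndr m =P u) => [ee|ne]; last by rewrite upd_neq //; apply/eqP.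
    rewrite ee upd_eq; apply/eqP => ex; move: hse; by rewrite /same_edge /sndr /rcvr /= -/(sndr m) -/(rcvr m) ee ex !eqxx orbT.
  case: (rcvr m =P u) => [ee|ne]; last by rewrite upd_neq //; apply/eqP.
  rewrite ee upd_eq; apply/eqP => ex; move: hse; by rewrite /same_edge /sndr /rcvr /= -/(sndr m) -/(rcvr m) ee -ex !eqxx.
- have hu0 := uniq_msgs (sT4u hI).
  move=> m /=; rewrite inE => /orP [/eqP ->|hmr].
    have hl' : link s0 u != u by apply/eqP.
    have [hadj hx hu] : [/\ adj x u, link s0 x != u & link s0 u != x] by exact: (sT3 hI hm).
    change [/\ adj u (link s0 u), upd (link s0) u x u != link s0 u
       & upd (link s0) u x (link s0 u) != u].
    rewrite upd_eq upd_neq; last by [].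
    split; [exact: (sT1 hI hl')|by rewrite eq_sym|exact: (sT2 hI hl')].
  have hm' := mem_rem hmr; have hne := mem_rem_uniq_neq hu0 hmr.
  have hse := sT4e hI hm hm' (_ : (r, x, u, sg) != m); rewrite eq_sym in hse; have {}hse := hse hne.
  case: (sT3 hI hm') => hadj ha hb; split => //.
    case: (sndr m =P u) => [ee|ne]; last by rewrite upd_neq //; apply/eqP.
    rewrite ee upd_eq; apply/eqP => ex; move: hse; by rewrite /same_edge /sndr /rcvr /= -/(sndr m) -/(rcvr m) ee ex !eqxx orbT.
  case: (rcvr m =P u) => [ee|ne]; last by rewrite upd_neq //; apply/eqP.
  rewrite ee upd_eq; apply/eqP => ex; move: hse; by rewrite /same_edge /sndr /rcvr /= -/(sndr m) -/(rcvr m) ee -ex !eqxx.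
Qed.

Lemma pred_none_of_not_issued pre (s : ast) r : R2p pre s -> ~~ issued pre r -> predq s r = None.
Proof.
move=> hR2 hn; case e: (predq s r) => [z|] //.
by case: (hR2 _ _ e) => hi _; rewrite hi in hn.
Qed.

Lemma not_in_msgs pre (s : ast) r m : R1p pre s -> ~~ issued pre r -> m \in msgs s -> req m != r.
Proof.
move=> hR1 hn hm; apply/eqP => e; case: (hR1 m hm) => hi _.
by rewrite e (negbTE hn) in hi.
Qed.

Lemma step_T4u pre s e s' : SInv pre s -> arrow_step w rv rt s e s' -> StepHyp pre e ->
  uniq (map req (msgs s')).
Proof.
move=> hI hst; case: hst hI => [s0 r hl|s0 r hl|s0 r x u sg tau hm h1 h2 hl|s0 r x u sg tau hm h1 h2 hl] hI hH /=.
- exact: sT4u hI.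
- case: (hH r erefl) => _ hn.
  rewrite (sT4u hI) andbT; apply/mapP => -[m hm em].
  by move: (not_in_msgs (sR1 hI) hn hm); rewrite -em eqxx.
- exact: subseq_uniq (map_subseq _ (rem_subseq _ _)) (sT4u hI).
- rewrite (subseq_uniq (map_subseq _ (rem_subseq _ _)) (sT4u hI)) andbT.
  apply/mapP => -[m hmr em].
  have hu0 := uniq_msgs (sT4u hI).
  have hne := mem_rem_uniq_neq hu0 hmr.
  have := uniq_map_eq (sT4u hI) hm (mem_rem hmr) em.
  by move=> ee; rewrite ee eqxx in hne.
Qed.

Lemma step_T4e pre s e s' : SInv pre s -> arrow_step w rv rt s e s' -> T4ep s'.
Proof.
move=> hI hst; case: hst hI => [s0 r hl|s0 r hl|s0 r x u sg tau hm h1 h2 hl|s0 r x u sg tau hm h1 h2 hl] hI /=.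
- move=> m m' /=; exact: (sT4e hI).
- move=> m m' /=; rewrite !inE => /orP [/eqP ->|hm] /orP [/eqP ->|hm'].
  + by rewrite eqxx.
  + move=> _; exact: not_same_edge_link (sT3 hI) erefl hm'.
  + move=> _; rewrite same_edge_swap; exact: not_same_edge_link (sT3 hI) erefl hm.
  + exact: (sT4e hI hm hm').
- move=> m m' /= hm1 hm2; exact: (sT4e hI (mem_rem hm1) (mem_rem hm2)).
- move=> m m' /=; rewrite !inE => /orP [/eqP ->|hm1] /orP [/eqP ->|hm2].
  + by rewrite eqxx.
  + move=> _; exact: not_same_edge_link (sT3 hI) erefl (mem_rem hm2).
  + move=> _; rewrite same_edge_swap; exact: not_same_edge_link (sT3 hI) erefl (mem_rem hm1).
  + exact: (sT4e hI (mem_rem hm1) (mem_rem hm2)).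
Qed.

Lemma step_T5 pre s e s' : SInv pre s -> arrow_step w rv rt s e s' -> T5p s'.
Proof.
move=> hI hst; case: hst hI => [s0 r hl|s0 r hl|s0 r x u sg tau hm h1 h2 hl|s0 r x u sg tau hm h1 h2 hl] hI /=.
- move=> p y hpy /=; exact: (sT5 hI hpy).
- move=> p y hpy /=; case: (sT5 hI hpy) => [hy|hp|[m hm hse]].
  + case: (y =P rv r) => [ey|ne]; last by constructor 1; rewrite upd_neq //; apply/eqP.
    constructor 3; exists (r, rv r, link s0 (rv r), rt r); first exact: mem_head.
    by rewrite /same_edge /sndr /rcvr /= -ey hy !eqxx orbT.
  + case: (p =P rv r) => [ep|ne]; last by constructor 2; rewrite upd_neq //; apply/eqP.
    constructor 3; exists (r, rv r, link s0 (rv r), rt r); first exact: mem_head.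
    by rewrite /same_edge /sndr /rcvr /= -ep hp !eqxx.
  + by constructor 3; exists m => //; rewrite inE hm orbT.
- move=> p y hpy /=; have hu0 := uniq_msgs (sT4u hI).
  case: (sT5 hI hpy) => [hy|hp|[m hm' hse]].
  + case: (y =P u) => [ey|ne]; last by constructor 1; rewrite upd_neq //; apply/eqP.
    by move: hpy; rewrite -hy ey hl hirr.
  + case: (p =P u) => [ep|ne]; last by constructor 2; rewrite upd_neq //; apply/eqP.
    by move: hpy; rewrite -hp ep hl hirr.
  + case: (m =P (r, x, u, sg)) => [em|nm].
      move: hse; rewrite em /same_edge /sndr /rcvr /= => /orP [/andP [/eqP ex /eqP eu]|/andP [/eqP ex /eqP eu]].
        by constructor 1; rewrite -eu upd_eq.
      by constructor 2; rewrite -eu upd_eq.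
    by constructor 3; exists m => //; apply: mem_rem_neq => //; apply/eqP.
- move=> p y hpy /=; have hu0 := uniq_msgs (sT4u hI).
  case: (sT5 hI hpy) => [hy|hp|[m hm' hse]].
  + case: (y =P u) => [ey|ne]; last by constructor 1; rewrite upd_neq //; apply/eqP.
    constructor 3; exists (r, u, link s0 u, tau); first exact: mem_head.
    by rewrite /same_edge /sndr /rcvr /= -ey hy !eqxx orbT.
  + case: (p =P u) => [ep|ne]; last by constructor 2; rewrite upd_neq //; apply/eqP.
    constructor 3; exists (r, u, link s0 u, tau); first exact: mem_head.
    by rewrite /same_edge /sndr /rcvr /= -ep hp !eqxx.
  + case: (m =P (r, x, u, sg)) => [em|nm].
      move: hse; rewrite em /same_edge /sndr /rcvr /= => /orP [/andP [/eqP ex /eqP eu]|/andP [/eqP ex /eqP eu]].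
        by constructor 1; rewrite -eu upd_eq.
      by constructor 2; rewrite -eu upd_eq.
    constructor 3; exists m => //; rewrite inE; apply/orP; right.
    by apply: mem_rem_neq => //; apply/eqP.
Qed.

Lemma issued_self pre r t : issued (rcons pre (@Issue R V r, t)) r.
Proof. by rewrite issued_rcons /is_issue_of /= eqxx orbT. Qed.

Lemma step_R1 pre s e s' : SInv pre s -> arrow_step w rv rt s e s' -> StepHyp pre e ->
  R1p (rcons pre e) s'.
Proof.
move=> hI hst; case: hst hI => [s0 r hl|s0 r hl|s0 r x u sg tau hm h1 h2 hl|s0 r x u sg tau hm h1 h2 hl] hI hH /=.
- case: (hH r erefl) => _ hn.
  move=> m /= hm; case: (sR1 hI hm) => hi hp; split; first exact: issued_mono.
  by rewrite upd_neq // (not_in_msgs (sR1 hI) hn hm).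
- case: (hH r erefl) => _ hn.
  move=> m /=; rewrite inE => /orP [/eqP ->|hm].
    split; first exact: issued_self.
    exact: pred_none_of_not_issued (sR2 hI) hn.
  case: (sR1 hI hm) => hi hp; split => //; exact: issued_mono.
- have hu0 := uniq_msgs (sT4u hI).
  move=> m /= hmr; have hm' := mem_rem hmr.
  case: (sR1 hI hm') => hi hp; split; first exact: issued_mono.
  rewrite upd_neq //; apply/eqP => er.
  have := uniq_map_eq (sT4u hI) hm hm' (esym er).
  by move=> ee; move: (mem_rem_uniq_neq hu0 hmr); rewrite ee eqxx.
- move=> m /=; rewrite inE => /orP [/eqP ->|hmr].
    case: (sR1 hI hm) => hi hp; split => //; exact: issued_mono.
  case: (sR1 hI (mem_rem hmr)) => hi hp; split => //; exact: issued_mono.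
Qed.

Lemma step_R2 pre s e s' : SInv pre s -> arrow_step w rv rt s e s' ->
  R2p (rcons pre e) s'.
Proof.
move=> hI hst; case: hst hI => [s0 r hl|s0 r hl|s0 r x u sg tau hm h1 h2 hl|s0 r x u sg tau hm h1 h2 hl] hI /=.
- move=> y z /=; case: (y =P r) => [->|ne].
    rewrite upd_eq => hz; case: (sR3 hI hz) => _ [->|hz']; split; try exact: issued_self.
      by left.
    by right; apply: issued_mono.
  rewrite upd_neq; last exact/eqP.
  move=> hz; case: (sR2 hI hz) => hi [->|hz']; split; try exact: issued_mono.
    by left.
  by right; apply: issued_mono.
- move=> y z /= hz; case: (sR2 hI hz) => hi [->|hz']; split; try exact: issued_mono.
    by left.
  by right; apply: issued_mono.
- move=> y z /=; case: (y =P r) => [->|ne].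
    rewrite upd_eq => hz; case: (sR1 hI hm) => /= hi _.
    case: (sR3 hI hz) => _ [->|hz']; split; try exact: issued_mono.
      by left.
    by right; apply: issued_mono.
  rewrite upd_neq; last exact/eqP.
  move=> hz; case: (sR2 hI hz) => hi [->|hz']; split; try exact: issued_mono.
    by left.
  by right; apply: issued_mono.
- move=> y z /= hz; case: (sR2 hI hz) => hi [->|hz']; split; try exact: issued_mono.
    by left.
  by right; apply: issued_mono.
Qed.

Lemma step_R3 pre s e s' : SInv pre s -> arrow_step w rv rt s e s' ->
  R3p (rcons pre e) s'.
Proof.
move=> hI hst; case: hst hI => [s0 r hl|s0 r hl|s0 r x u sg tau hm h1 h2 hl|s0 r x u sg tau hm h1 h2 hl] hI /=.
- move=> y z /=; case: (y =P rv r) => [->|ne].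
    rewrite upd_eq => -[<-]; split => //; right; exact: issued_self.
  rewrite upd_neq; last exact/eqP.
  move=> hz; case: (sR3 hI hz) => hi hz'; split => //.
  by case: hz' => [->|hz']; [left|right; apply: issued_mono].
- move=> y z /=; case: (y =P rv r) => [->|ne].
    rewrite upd_eq => -[<-]; split => //; right; exact: issued_self.
  rewrite upd_neq; last exact/eqP.
  move=> hz; case: (sR3 hI hz) => hi hz'; split => //.
  by case: hz' => [->|hz']; [left|right; apply: issued_mono].
- move=> y z /= hz; case: (sR3 hI hz) => hi hz'; split => //.
  by case: hz' => [->|hz']; [left|right; apply: issued_mono].
- move=> y z /= hz; case: (sR3 hI hz) => hi hz'; split => //.
  by case: hz' => [->|hz']; [left|right; apply: issued_mono].
Qed.

Lemma TM_mono pre (s : ast) e m : TMp pre s -> m \in msgs s -> has (fun e0 : ev => e0.2 == stm m) (rcons pre e).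
Proof. by move=> h hm; rewrite has_rcons (h m hm) orbT. Qed.

Lemma step_TM pre s e s' : SInv pre s -> arrow_step w rv rt s e s' ->
  TMp (rcons pre e) s'.
Proof.
move=> hI hst; case: hst hI => [s0 r hl|s0 r hl|s0 r x u sg tau hm h1 h2 hl|s0 r x u sg tau hm h1 h2 hl] hI /=.
- move=> m /= hm; exact: TM_mono (sTM hI) hm.
- move=> m /=; rewrite inE => /orP [/eqP ->|hm]; last exact: TM_mono (sTM hI) hm.
  by rewrite has_rcons /= eqxx.
- move=> m /= hmr; exact: TM_mono (sTM hI) (mem_rem hmr).
- move=> m /=; rewrite inE => /orP [/eqP ->|hmr]; last exact: TM_mono (sTM hI) (mem_rem hmr).
  by rewrite has_rcons /= eqxx.
Qed.

Lemma step_LA pre s e s' : SInv pre s -> arrow_step w rv rt s e s' -> LAf (link s').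
Proof.
move=> hI hst; case: hst hI => [s0 r hl|s0 r hl|s0 r x u sg tau hm h1 h2 hl|s0 r x u sg tau hm h1 h2 hl] hI /=.
- exact: sLA hI.
- exact: LA_upd_self (sLA hI).
- exact: LA_upd (sLA hI) (SA hI hm).
- exact: LA_upd (sLA hI) (SA hI hm).
Qed.

Lemma step_SInv pre s e s' : SInv pre s -> arrow_step w rv rt s e s' -> StepHyp pre e ->
  SInv (rcons pre e) s'.
Proof.
move=> hI hst hH; constructor.
- exact: step_T1 hI hst.
- exact: step_T2 hI hst.
- exact: step_T3 hI hst.
- exact: step_T4u hI hst hH.
- exact: step_T4e hI hst.
- exact: step_T5 hI hst.
- exact: step_R1 hI hst hH.
- exact: step_R2 hI hst.
- exact: step_R3 hI hst.
- exact: step_LA hI hst.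
- exact: step_TM hI hst.
Qed.

Definition agree_except (s s' : ast) z :=
  (forall x, x != z -> link s' x = link s x) /\ (forall x, x != z -> lastreq s' x = lastreq s x).

Lemma tl_avoid s s' z u : agree_except s s' z -> (forall k, iter k (link s) u != z) -> tl s' u = tl s u.
Proof.
move=> [hl hr] hu.
have e : iter #|V| (link s') u = iter #|V| (link s) u.
  by apply: (@iter_agree _ (link s) (link s') z) => // i _; exact: hu.
rewrite /tl /sinkOf e; exact: hr.
Qed.

Lemma tl_shift (s : ast) u k : LAf (link s) -> tl s (iter k (link s) u) = tl s u.
Proof. by move=> hLA; rewrite /tl /sinkOf sinkOf_shift. Qed.

Lemma tl_link (s : ast) u : LAf (link s) -> tl s (link s u) = tl s u.
Proof. by move=> hLA; rewrite -(tl_shift u 1 hLA). Qed.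

Lemma tl_sink (s : ast) u : link s u = u -> tl s u = lastreq s u.
Proof. by move=> h; rewrite /tl /sinkOf iter_fix. Qed.

Lemma tl_via s s' z u : agree_except s s' z -> LAf (link s) -> LAf (link s') ->
  (exists k, iter k (link s) u = z) -> tl s u = tl s z /\ tl s' u = tl s' z.
Proof.
move=> [hl hr] hLA hLA' hex; case: (hit_min hex) => k [hk hmin]; split.
  by rewrite -hk tl_shift.
have : iter k (link s') u = z by rewrite (@iter_agree _ (link s) (link s') z).
by move=> <-; rewrite tl_shift.
Qed.

Definition Pn (s : ast) zs z :=
  predq s z = None /\ exists b, mtarget s z = Some b /\ exists k, iter k (link s) b = zs.

Lemma E_change s s' zs exc : agree_except s s' zs -> LAf (link s) -> LAf (link s') ->
  (forall z, z != exc -> predq s' z = predq s z /\ mtarget s' z = mtarget s z) ->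
  forall z, z != exc -> Ef s' z = Ef s z \/ (Ef s z = tl s zs /\ Ef s' z = tl s' zs).
Proof.
move=> hag hLA hLA' hpm z hz; case: (hpm z hz) => hp hm.
rewrite /Ef hp hm; case: (predq s z) => [p|]; first by left.
case: (mtarget s z) => [b|]; last by left.
case: (classic (exists k, iter k (link s) b = zs)) => hb.
  by right; exact: tl_via hag hLA hLA' hb.
left; apply: tl_avoid hag _ => k; apply/eqP => e; apply: hb; by exists k.
Qed.

Lemma tl_step s s' zs u L : agree_except s s' zs -> LAf (link s) -> LAf (link s') ->
  (forall L, tl s zs = Some L -> exists L', tl s' zs = Some L' /\ reachO (Ef s') L' L) ->
  tl s u = Some L -> exists L', tl s' u = Some L' /\ reachO (Ef s') L' L.
Proof.
move=> hag hLA hLA' hzs hu.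
case: (classic (exists k, iter k (link s) u = zs)) => hb.
  case: (tl_via hag hLA hLA' hb) => e1 e2; rewrite e2; apply: hzs; by rewrite -e1.
exists L; split; last exact: reachO_refl.
rewrite -hu; apply: tl_avoid hag _ => k; apply/eqP => e; apply: hb; by exists k.
Qed.

Lemma mtarget_mem (s : ast) m : uniq (map req (msgs s)) -> m \in msgs s -> mtarget s (req m) = Some (rcvr m).
Proof. exact: mtarget_mem_gen. Qed.

Lemma Ef_fresh pre (s : ast) r : SInv pre s -> r != 0 -> ~~ issued pre r -> forall z, Ef s z != Some r.
Proof.
move=> hI h0 hn z; rewrite /Ef; case e: (predq s z) => [p|].
  apply/eqP => -[ep]; case: (sR2 hI e) => _; rewrite ep => -[er|hi].
    by rewrite er eqxx in h0.
  by rewrite hi in hn.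
case: (mtarget s z) => [b|] //; rewrite /tl; apply/eqP => hb.
case: (sR3 hI hb) => _ [er|hi]; first by rewrite er eqxx in h0.
by rewrite hi in hn.
Qed.

Lemma tl_fresh pre (s : ast) r u : SInv pre s -> r != 0 -> ~~ issued pre r -> tl s u != Some r.
Proof.
move=> hI h0 hn; rewrite /tl; apply/eqP => hb.
case: (sR3 hI hb) => _ [er|hi]; first by rewrite er eqxx in h0.
by rewrite hi in hn.
Qed.

Lemma Ef_new pre (s : ast) r : SInv pre s -> ~~ issued pre r -> Ef s r = None.
Proof.
move=> hI hn; rewrite /Ef (pred_none_of_not_issued (sR2 hI) hn) /mtarget mtarget_none_gen //.
move=> m hm; exact: not_in_msgs (sR1 hI) hn hm.
Qed.

Definition StepConcl (s s' : ast) :=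
  [/\ (forall z z', reachO (Ef s) z z' -> reachO (Ef s') z z'),
      (forall u L, tl s u = Some L -> exists L', tl s' u = Some L' /\ reachO (Ef s') L' L)
    & acyc (Ef s')].

Lemma finish_IT s s' zs r : agree_except s s' zs -> LAf (link s) -> LAf (link s') ->
  (forall z, z != r -> predq s' z = predq s z /\ mtarget s' z = mtarget s z) ->
  acyc (Ef s) -> Ef s r = None -> Ef s' r = tl s zs -> tl s' zs = Some r ->
  (forall z, Ef s z != Some r) -> tl s zs != Some r -> StepConcl s s'.
Proof.
move=> hag hLA hLA' hpm hac hfr hgr htl hfresh hOV.
have hA : forall z, z != r -> Ef s' z = Ef s z \/ (Ef s z = tl s zs /\ Ef s' z = Some r).
  move=> z hz; case: (E_change hag hLA hLA' hpm hz) => [->|[e1 e2]]; [by left|right].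
  by rewrite e1 e2 htl.
split.
- exact: IT_reach hA hfr hgr.
- move=> u L hu; apply: tl_step hag hLA hLA' _ hu => L0 hL0.
  exists r; split => //; apply: reachO_edge; by rewrite hgr.
- exact: IT_EA hA hgr hfresh hOV hac.
Qed.

Lemma finish_RT s s' zs y La : agree_except s s' zs -> LAf (link s) -> LAf (link s') ->
  (forall z, z != y -> predq s' z = predq s z /\ mtarget s' z = mtarget s z) ->
  acyc (Ef s) -> Ef s' y = Ef s y -> Ef s y = tl s zs -> tl s' zs = Some La ->
  reachO (Ef s) La y -> StepConcl s s'.
Proof.
move=> hag hLA hLA' hpm hac hgy hfy htl hreach.
have hA : forall z, z != y -> Ef s' z = Ef s z \/ (Ef s z = tl s zs /\ Ef s' z = Some La).
  move=> z hz; case: (E_change hag hLA hLA' hpm hz) => [->|[e1 e2]]; [by left|right].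
  by rewrite e1 e2 htl.
split.
- exact: RT_reach hA hgy hfy hreach hac.
- move=> u L hu; apply: tl_step hag hLA hLA' _ hu => L0 hL0.
  exists La; split => //; apply: reachO_trans (RT_path hA hgy hfy hreach hac) _.
  apply: reachO_edge; by rewrite hgy hfy.
- exact: RT_EA hA hgy hfy hreach hac.
Qed.

Lemma mtarget_rem_self (ms : seq msg) m0 : uniq (map req ms) -> m0 \in ms ->
  ohead [seq rcvr m' | m' <- rem m0 ms & req m' == req m0] = None.
Proof.
move=> hu hm; apply: mtarget_none_gen => m hmr; apply/eqP => e.
have := uniq_map_eq hu (mem_rem hmr) hm e => ee.
by move: (mem_rem_uniq_neq (map_uniq hu) hmr); rewrite ee eqxx.
Qed.

Lemma step_E pre s e s' : Inv pre s -> arrow_step w rv rt s e s' -> StepHyp pre e -> StepConcl s s'.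
Proof.
move=> hI hst; have hLA' := step_LA (iS hI) hst.
case: hst hI hLA' => [s0 r hl|s0 r hl|s0 r x u sg tau hm h1 h2 hl|s0 r x u sg tau hm h1 h2 hl] hI hLA' hH;
  have hS := iS hI; have hLA := sLA hS; have hac := iEA hI.
- case: (hH r erefl) => h0 hn.
  set s1 := AState _ _ _ _.
  have hag : agree_except s0 s1 (rv r) by split => x0 hx0 //=; exact: upd_neq.
  have hpm : forall z, z != r -> predq s1 z = predq s0 z /\ mtarget s1 z = mtarget s0 z.
    move=> z hz /=; split => //; exact: upd_neq.
  have hfr := Ef_new hS hn.
  have hgr : Ef s1 r = tl s0 (rv r).
    rewrite /Ef /= upd_eq (tl_sink hl).
    case: (lastreq s0 (rv r)) => // .
    rewrite /mtarget /= mtarget_none_gen // => m hm; exact: not_in_msgs (sR1 hS) hn hm.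
  have htl : tl s1 (rv r) = Some r by rewrite (@tl_sink s1) /= ?upd_eq.
  exact: (finish_IT hag hLA hLA' hpm hac hfr hgr htl (Ef_fresh hS h0 hn) (tl_fresh _ hS h0 hn)).
- case: (hH r erefl) => h0 hn.
  have hl' : link s0 (rv r) != rv r by apply/eqP.
  set s1 := AState _ _ _ _.
  have hag : agree_except s0 s1 (rv r) by split => x0 hx0 //=; exact: upd_neq.
  have hpm : forall z, z != r -> predq s1 z = predq s0 z /\ mtarget s1 z = mtarget s0 z.
    move=> z hz /=; split => //; have hrz : r != z by rewrite eq_sym.
    by rewrite /mtarget /= (negbTE hrz).
  have hfr := Ef_new hS hn.
  have hgr : Ef s1 r = tl s0 (rv r).
    rewrite /Ef /= (pred_none_of_not_issued (sR2 hS) hn) /mtarget /= eqxx /=.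
    rewrite -(tl_link _ hLA); apply: (tl_avoid hag) => k; exact: no_return.
  have htl : tl s1 (rv r) = Some r by rewrite (@tl_sink s1) /= ?upd_eq.
  exact: (finish_IT hag hLA hLA' hpm hac hfr hgr htl (Ef_fresh hS h0 hn) (tl_fresh _ hS h0 hn)).
- have hu0 := sT4u hS.
  case: (iF3 hI hm) => La [hLa hreach].
  set s1 := AState _ _ _ _.
  have hag : agree_except s0 s1 u by split => x0 hx0 //=; exact: upd_neq.
  have hpm : forall z, z != r -> predq s1 z = predq s0 z /\ mtarget s1 z = mtarget s0 z.
    move=> z hz /=; split; first exact: upd_neq.
    by rewrite /mtarget /= (mtarget_rem_gen hu0 hm hz).
  have hfy : Ef s0 r = tl s0 u.
    by rewrite /Ef (proj2 (sR1 hS hm)) /mtarget (mtarget_mem_gen hu0 hm).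
  have hgy : Ef s1 r = Ef s0 r.
    rewrite hfy /Ef /= upd_eq -(tl_sink hl).
    case: (tl s0 u) => //=.
    by rewrite /mtarget /= (mtarget_rem_self hu0 hm).
  have htl : tl s1 u = Some La.
    rewrite -(tl_link _ hLA') /= upd_eq -hLa.
    apply: tl_avoid hag _; exact: (SA hS hm).
  exact: (finish_RT hag hLA hLA' hpm hac hgy hfy htl hreach).
- have hu0 := sT4u hS.
  have hl' : link s0 u != u by apply/eqP.
  case: (iF3 hI hm) => La [hLa hreach].
  set s1 := AState _ _ _ _.
  have hag : agree_except s0 s1 u by split => x0 hx0 //=; exact: upd_neq.
  have hpm : forall z, z != r -> predq s1 z = predq s0 z /\ mtarget s1 z = mtarget s0 z.
    move=> z hz /=; split => //; have hrz : r != z by rewrite eq_sym.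
    by rewrite /mtarget /= (negbTE hrz) (mtarget_rem_gen hu0 hm hz).
  have hfy : Ef s0 r = tl s0 u.
    by rewrite /Ef (proj2 (sR1 hS hm)) /mtarget (mtarget_mem_gen hu0 hm).
  have hgy : Ef s1 r = Ef s0 r.
    rewrite hfy /Ef /= (proj2 (sR1 hS hm)) /mtarget /= eqxx /=.
    rewrite -(tl_link _ hLA); apply: tl_avoid hag _ => k; exact: no_return.
  have htl : tl s1 u = Some La.
    rewrite -(tl_link _ hLA') /= upd_eq -hLa.
    apply: tl_avoid hag _; exact: (SA hS hm).
  exact: (finish_RT hag hLA hLA' hpm hac hgy hfy htl hreach).
Qed.

Lemma F3_survive (s s' : ast) m : StepConcl s s' ->
  (exists L, tl s (sndr m) = Some L /\ reachO (Ef s) L (req m)) ->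
  exists L, tl s' (sndr m) = Some L /\ reachO (Ef s') L (req m).
Proof.
move=> [hT hF _] [L [h1 h2]]; case: (hF _ _ h1) => L' [h3 h4].
exists L'; split => //; exact: reachO_trans h4 (hT _ _ h2).
Qed.

Lemma step_F3 pre s e s' : Inv pre s -> arrow_step w rv rt s e s' -> StepHyp pre e -> F3p s'.
Proof.
move=> hI hst hH; have hC := step_E hI hst hH; have hLA' := step_LA (iS hI) hst.
case: hst hI hC hLA' hH => [s0 r hl|s0 r hl|s0 r x u sg tau hm h1 h2 hl|s0 r x u sg tau hm h1 h2 hl] hI hC hLA' hH;
  have hS := iS hI; have hLA := sLA hS.
- move=> m /= hm; exact: F3_survive hC (iF3 hI hm).
- move=> m /=; rewrite inE => /orP [/eqP ->|hm]; last exact: F3_survive hC (iF3 hI hm).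
  exists r; split; last exact: reachO_refl.
  set s1 := AState _ _ _ _; change (tl s1 (rv r) = Some r).
  by rewrite (@tl_sink s1) /= ?upd_eq.
- move=> m /= hmr; exact: F3_survive hC (iF3 hI (mem_rem hmr)).
- move=> m /=; rewrite inE => /orP [/eqP ->|hmr]; last exact: F3_survive hC (iF3 hI (mem_rem hmr)).
  case: (iF3 hI hm) => La [hLa hreach].
  set s1 := AState _ _ _ _.
  have hag : agree_except s0 s1 u by split => x0 hx0 //=; exact: upd_neq.
  exists La; split; last by case: hC => hT _ _; exact: hT.
  change (tl s1 u = Some La).
  rewrite -(tl_link _ hLA') /= upd_eq -hLa.
  apply: tl_avoid hag _; exact: (SA hS hm).
Qed.

Lemma step_Inv pre s e s' : Inv pre s -> arrow_step w rv rt s e s' -> StepHyp pre e ->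
  Inv (rcons pre e) s'.
Proof.
move=> hI hst hH; constructor.
- exact: step_SInv (iS hI) hst hH.
- by case: (step_E hI hst hH).
- exact: step_F3 hI hst hH.
Qed.

Lemma issue_Ef pre s r t s' : Inv pre s -> arrow_step w rv rt s (@Issue R V r, t) s' -> StepHyp pre (@Issue R V r, t) ->
  Ef s' r = tl s (rv r).
Proof.
move=> hI hst hH; have hS := iS hI; have hLA := sLA hS.
case: (hH r erefl) => h0 hn.
inversion hst; subst.
- rewrite /Ef /= upd_eq (tl_sink H3).
  case: (lastreq s (rv r)) => // .
  rewrite /mtarget /= mtarget_none_gen // => m hm; exact: not_in_msgs (sR1 hS) hn hm.
- have hl' : link s (rv r) != rv r by apply/eqP.
  set s1 := AState _ _ _ _.
  have hag : agree_except s s1 (rv r) by split => x0 hx0 //=; exact: upd_neq.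
  rewrite /Ef /= (pred_none_of_not_issued (sR2 hS) hn) /mtarget /= eqxx /=.
  rewrite -(tl_link _ hLA); apply: (tl_avoid hag) => k; exact: no_return.
Qed.

Lemma predq_set s e s' y : arrow_step w rv rt s e s' -> predq s' y <> predq s y ->
  (e.1 = @Issue R V y /\ link s (rv y) = rv y /\ predq s' y = lastreq s (rv y)) \/
  (exists x b sg, e.1 = Recv y x b sg /\ link s b = b /\ predq s' y = lastreq s b).
Proof.
move=> hst hne; inversion hst; subst; rewrite /= in hne *.
- case: (y =P r) => [ey|ney]; last by rewrite upd_neq in hne; [|exact/eqP].
  subst; left; split => //; split => //; by rewrite upd_eq.
- by [].
- case: (y =P r) => [ey|ney]; last by rewrite upd_neq in hne; [|exact/eqP].
  subst; right; exists x, u, s0; split => //; split => //; by rewrite upd_eq.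
- by [].
Qed.

End Proto.

Section Runs.
Variables (R : realFieldType) (V : finType) (w : V -> V -> R) (rv : nat -> V) (rt : nat -> R).
Notation ast := (astate R V).
Notation ev := (event R V * R)%type.
Notation run := (arrow_run w rv rt).
Notation step := (arrow_step w rv rt).

Lemma run_cat s p1 p2 s'' : run s (p1 ++ p2) s'' <-> exists s', run s p1 s' /\ run s' p2 s''.
Proof.
split.
  elim: p1 s => [|e p1 IH] s /=; first by move=> h; exists s; split => //; constructor.
  move=> h; inversion h; subst.
  case: (IH _ H4) => s' [h1 h2]; exists s'; split => //; econstructor; eauto.
move=> [s' [h1 h2]]; elim: h1 h2 => //= {s p1 s'} s e st' tr st'' hs hr IH h2.
econstructor; eauto.
Qed.

Lemma step_det s e s1 s2 : step s e s1 -> step s e s2 -> s1 = s2.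
Proof.
move=> h1 h2; inversion h1; subst; inversion h2; subst => //; congruence.
Qed.

Lemma run_det s p s1 s2 : run s p s1 -> run s p s2 -> s1 = s2.
Proof.
move=> h1; elim: h1 s2 => {s p s1} [s|s e st' tr st'' hs hr IH] s2 h2; inversion h2; subst => //.
apply: IH; by rewrite (step_det hs H2).
Qed.

Lemma run_rcons s p e s'' : run s (rcons p e) s'' <-> exists s', run s p s' /\ step s' e s''.
Proof.
rewrite -cats1 run_cat; split => -[s' [h1 h2]]; exists s'; split => //.
  inversion h2; subst; inversion H4; subst => //.
econstructor; eauto; constructor.
Qed.

Lemma run_nil_inv s s' : run s [::] s' -> s' = s.
Proof. by move=> h; inversion h. Qed.

Lemma mem_rem_neq_gen (T : eqType) (x y : T) s : x \in s -> x != y -> x \in rem y s.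
Proof.
elim: s => [|z s IH] //=; rewrite inE => /orP [/eqP <-|hx] hxy.
  by case: ifP => [/eqP e|_]; [by rewrite e eqxx in hxy|exact: mem_head].
case: ifP => _ //; by rewrite inE IH ?orbT.
Qed.

Lemma step_keeps_msg s e s' (m : nat * V * V * R) : step s e s' -> m \in msgs s ->
  e.1 <> Recv m.1.1.1 m.1.1.2 m.1.2 m.2 -> m \in msgs s'.
Proof.
case: m => [[[r0 x0] u0] sg0] hst hm hne; case: hst hm hne => [s0 r hl|s0 r hl|s0 r x u sg tau hm' h1 h2 hl|s0 r x u sg tau hm' h1 h2 hl] hm hne /=.
- exact: hm.
- by rewrite inE hm orbT.
- apply: mem_rem_neq_gen => //; apply/eqP => -[e1 e2 e3 e4]; apply: hne; by subst.
- rewrite inE; apply/orP; right; apply: mem_rem_neq_gen => //; apply/eqP => -[e1 e2 e3 e4]; apply: hne; by subst.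
Qed.

Lemma recv_later s suf stf (m : nat * V * V * R) (x0 : ev) : run s suf stf -> msgs stf = [::] ->
  m \in msgs s -> exists2 j, j < size suf & (nth x0 suf j).1 = Recv m.1.1.1 m.1.1.2 m.1.2 m.2.
Proof.
move=> h; elim: h => {s suf stf} [s|s e st' tr st'' hs hr IH] hf hm; first by rewrite hf in hm.
case: (classic (e.1 = Recv m.1.1.1 m.1.1.2 m.1.2 m.2)) => he; first by exists 0.
case: (IH hf (step_keeps_msg hs hm he)) => j hj hj'; by exists j.+1.
Qed.

End Runs.

Section Main.
Variables (R : realFieldType) (V : finType) (adj : rel V)
    (w d : V -> V -> R) (v0 : V) (link0 : V -> V) (n : nat)
    (rv : nat -> V) (rt : nat -> R) (tr : seq (@event R V * R))
    (stf : @astate R V) (q : nat -> nat).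
Hypothesis hwt : weighted_tree adj w.
Hypothesis htd : is_tree_dist adj w d.
Hypothesis hex : arrow_execution adj w d v0 link0 n rv rt tr stf.
Hypothesis hq : queue_order n stf q.

Notation ast := (astate R V).
Notation ev := (event R V * R)%type.
Notation run := (arrow_run w rv rt).
Notation step := (arrow_step w rv rt).

Let hsym : forall u v, adj u v = adj v u. Proof. by case: hwt. Qed.
Let hirr : irreflexive adj. Proof. by case: hwt. Qed.
Let hwpos : forall u v, adj u v -> (0 < w u v)%R. Proof. by case: hwt. Qed.
Let hwsym : forall u v, adj u v -> w u v = w v u. Proof. by case: hwt. Qed.
Let htree : is_tree adj. Proof. by case: hwt. Qed.
Let hinit : init_links adj w d v0 link0. Proof. by case: hex. Qed.
Let hrv0 : rv 0 = v0. Proof. by case: hex => -[]. Qed.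
Let hrun : run (init_state R v0 link0) tr stf. Proof. by case: hex. Qed.
Let hsorted : sorted <=%R (map snd tr). Proof. by case: hex => _ _ _ _ []. Qed.
Let hcount : forall r, count (is_issue_of r) tr = (0 < r <= n). Proof. by case: hex => _ _ _ _ []. Qed.
Let hmsgf : msgs stf = [::]. Proof. by case: hex => _ _ _ _ []. Qed.

Definition s0 := init_state R v0 link0.

Lemma init_Inv : Inv adj rv [::] s0.
Proof.
have hEf : forall z, Ef s0 z = None by [].
constructor; first constructor.
- move=> u /= hu; exact: (@link0_T1 V adj R w d v0 link0 hinit u hu).
- move=> u /= hu.
  have hu0 : u != v0 by apply/eqP => e; rewrite e (proj1 hinit) eqxx in hu.
  apply/eqP => e.
  have hx0 : link0 u != v0 by apply/eqP => e'; rewrite e' (proj1 hinit) in e; rewrite e eqxx in hu0.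
  have := link0_dec hwpos hinit hu0; have := link0_dec hwpos hinit hx0; rewrite e.
  move=> h1 h2; have := lt_trans h1 h2; by rewrite ltxx.
- by [].
- by [].
- by [].
- move=> p u hpu /=.
  case: (link0_T5 htree hirr hwpos hinit hsym hpu) => h; [by constructor 1|by constructor 2].
- by [].
- by [].
- move=> u x /=; case: ifP => [/eqP -> [<-]|] //; split => //; by left.
- exact: link0_LA hwpos hinit.
- by [].
- by move=> z; exists 1.
- by [].
Qed.

Definition ev0 : ev := (@Issue R V 0, 0%R).
Definition At k s := run s0 (take k tr) s.

Lemma At_exists k : k <= size tr -> exists s, At k s /\ run s (drop k tr) stf.
Proof. move=> hk; apply/run_cat; by rewrite cat_take_drop. Qed.

Lemma At_det k s1 s2 : At k s1 -> At k s2 -> s1 = s2.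
Proof. exact: run_det. Qed.

Lemma At_step i s s' : i < size tr -> At i s -> At i.+1 s' -> step s (nth ev0 tr i) s'.
Proof.
move=> hi h1; rewrite /At (take_nth ev0 hi) => /run_rcons [s1 [h2 h3]].
by rewrite (At_det h1 h2).
Qed.

Lemma At_stf : At (size tr) stf.
Proof. by rewrite /At take_size. Qed.

Lemma stephyp i : i < size tr -> StepHyp (take i tr) (nth ev0 tr i).
Proof.
move=> hi r hr.
have hc := hcount r.
have e1 : count (is_issue_of r) tr = count (is_issue_of r) (take i tr) + (is_issue_of r (nth ev0 tr i)) + count (is_issue_of r) (drop i.+1 tr).
  rewrite -{1}(cat_take_drop i.+1 tr) count_cat (take_nth ev0 hi) -cats1 count_cat /= addn0.
  by [].
have hie : is_issue_of r (nth ev0 tr i) by rewrite /is_issue_of hr eqxx.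
rewrite hie in e1.
have h0 : r != 0 by apply/eqP => e; move: hc; rewrite e1 e /=; lia.
split => //; rewrite /issued has_count; move: hc; rewrite e1; case: (0 < r <= n); lia.
Qed.

Lemma At_Inv k s : At k s -> Inv adj rv (take k tr) s.
Proof.
elim: k s => [|k IH] s.
  by rewrite /At take0 => /run_nil_inv ->; exact: init_Inv.
case: (ltnP k (size tr)) => hk.
  rewrite /At (take_nth ev0 hk) => /run_rcons [s1 [h1 h2]].
  exact (step_Inv hsym hirr htree (IH _ h1) h2 (stephyp hk)).
rewrite /At !take_oversize //; last by lia.
by move=> h; have := IH s; rewrite /At take_oversize //; apply.
Qed.

Lemma At_mono k k' s s' : k <= k' -> k' <= size tr -> At k s -> At k' s' ->
  (forall z z', reachO (Ef s) z z' -> reachO (Ef s') z z') /\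
  (forall u L, tl s u = Some L -> exists L', tl s' u = Some L' /\ reachO (Ef s') L' L).
Proof.
move=> hkk; elim: k' hkk s' => [|k' IH] hkk s' hk' hA hA'.
  have e : k = 0 by lia.
  subst; rewrite (At_det hA hA'); split => //; move=> u L h; exists L; split => //; exact: reachO_refl.
case: (ltnP k k'.+1) => hlt; last first.
  have e : k = k'.+1 by lia.
  subst; rewrite (At_det hA hA'); split => //; move=> u L h; exists L; split => //; exact: reachO_refl.
have hk'le : k' <= size tr by lia.
have hk'lt : k' < size tr by lia.
case: (At_exists hk'le) => s1 [h1 _].
have hkk' : k <= k' by lia.
have [hT hF] := IH hkk' s1 hk'le hA h1.
have hst := At_step hk'lt h1 hA'.
case: (step_E hirr htree (At_Inv h1) hst (stephyp hk'lt)) => hT2 hF2 _.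
split; first by move=> z z' /hT /hT2.
move=> u L /hF [L1 [h3 h4]]; case: (hF2 _ _ h3) => L2 [h5 h6].
exists L2; split => //; exact: reachO_trans h6 (hT2 _ _ h4).
Qed.


Lemma time_mono i j : i <= j -> j < size tr -> ((nth ev0 tr i).2 <= (nth ev0 tr j).2)%R.
Proof.
move=> hij hj.
have := sorted_leq_nth (@le_trans _ R) (@lexx _ R) 0%R hsorted.
move=> /(_ i j); rewrite !inE !size_map !(nth_map ev0) //; last by lia.
by apply => //; lia.
Qed.

Definition kap (T : R) := find (fun e : ev => (T < e.2)%R) tr.

Lemma kap_size T : kap T <= size tr.
Proof. exact: find_size. Qed.

Lemma K3 i T : i < kap T -> ((nth ev0 tr i).2 <= T)%R.
Proof. by move=> h; have := before_find ev0 h; move/negbT; rewrite -leNgt. Qed.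

Lemma K2 i T : i < size tr -> (T < (nth ev0 tr i).2)%R -> kap T <= i.
Proof.
move=> hi hT; rewrite leqNgt; apply/negP => h.
by have := K3 h; rewrite leNgt hT.
Qed.

Lemma K1 i T : i < size tr -> ((nth ev0 tr i).2 <= T)%R -> i < kap T.
Proof.
move=> hi hT; rewrite ltnNge; apply/negP => h.
have hk : kap T < size tr by lia.
have hh : has (fun e : ev => (T < e.2)%R) tr by rewrite has_find.
have := nth_find ev0 hh; rewrite -/(kap T) => hlt.
have := time_mono h hi.
move=> hle; have := lt_le_trans hlt hle; by rewrite ltNge hT.
Qed.

Lemma kap_mono T1 T2 : (T1 <= T2)%R -> kap T1 <= kap T2.
Proof.
move=> h; rewrite leqNgt; apply/negP => hlt.
have hk : kap T2 < size tr by have := kap_size T1; lia.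
have hh : has (fun e : ev => (T2 < e.2)%R) tr by rewrite has_find.
have := nth_find ev0 hh; rewrite -/(kap T2) => h2.
have := K3 hlt => h1.
have := lt_le_trans h2 h1; by rewrite ltNge h.
Qed.

Lemma issue_index r : 0 < r <= n -> exists2 i, i < size tr & (nth ev0 tr i).1 = @Issue R V r.
Proof.
move=> hr; have : has (is_issue_of r) tr by rewrite has_count hcount hr.
case/(has_nthP ev0) => i hi; rewrite /is_issue_of.
case e: (nth ev0 tr i) => [[r'|] t] //= /eqP er; exists i => //; by rewrite e er.
Qed.

Lemma issue_inv s r t s' : step s (@Issue R V r, t) s' ->
  [/\ t = rt r, link s' (rv r) = rv r & lastreq s' (rv r) = Some r].
Proof. by move=> h; inversion h; subst; rewrite /= ?upd_eq. Qed.

Lemma recv_inv s r x u sg tau s' : step s (Recv r x u sg, tau) s' ->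
  [/\ (r, x, u, sg) \in msgs s, (tau <= sg + w x u)%R & link s' u = x].
Proof. by move=> h; inversion h; subst; rewrite /= ?upd_eq. Qed.

Lemma Ef_stf0 : Ef stf 0 = None.
Proof.
have hI := At_Inv At_stf; rewrite take_size in hI.
rewrite /Ef; case e: (predq stf 0) => [z|].
  case: (sR2 (iS hI) e) => hi _; move: hi; by rewrite /issued has_count hcount.
by rewrite /mtarget hmsgf.
Qed.

Lemma final_chain i k z : i <= n -> iterO (Ef stf) k (q i) = Some z -> k <= i /\ z = q (i - k).
Proof.
case: hq => hq0 hpred _ _ hi.
elim: k z => [|k IH] z; first by rewrite iterO0 => -[<-]; rewrite subn0.
rewrite iterOS; case e: (iterO (Ef stf) k (q i)) => [z0|] //= hz.
case: (IH _ e) => hk ez0; rewrite ez0 in hz.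
case: (ltnP k i) => hki; last first.
  have e0 : i - k = 0 by lia.
  by rewrite e0 hq0 Ef_stf0 in hz.
have e1 : i - k = (i - k.+1).+1 by lia.
move: hz; rewrite e1 /Ef hpred; last by lia.
by move=> [<-]; split.
Qed.

Lemma final_order i j : i <= n -> j <= n -> reachO (Ef stf) (q i) (q j) -> j <= i.
Proof.
move=> hi hj [k hk]; case: (final_chain hi hk) => hki e.
case: hq => _ _ _ hinj.
have hik : i - k <= n by lia.
have := hinj _ _ hj hik e; lia.
Qed.

Definition good rj (s : ast) u := exists L, tl s u = Some L /\ reachO (Ef s) L rj.

Lemma good_mono rj k k' s s' u : k <= k' -> k' <= size tr -> At k s -> At k' s' ->
  good rj s u -> good rj s' u.
Proof.
move=> h1 h2 hA hA' [L [hL hr]].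
case: (At_mono h1 h2 hA hA') => hT hF.
case: (hF _ _ hL) => L' [h3 h4]; exists L'; split => //; exact: reachO_trans h4 (hT _ _ hr).
Qed.

Lemma reach_mono k k' s s' z z' : k <= k' -> k' <= size tr -> At k s -> At k' s' ->
  reachO (Ef s) z z' -> reachO (Ef s') z z'.
Proof. by move=> h1 h2 hA hA'; case: (At_mono h1 h2 hA hA') => hT _; apply: hT. Qed.

Lemma state_at k : k <= size tr -> exists s, At k s.
Proof. by move=> hk; case: (At_exists hk) => s [h _]; exists s. Qed.

Lemma KL rj : 0 < rj <= n -> forall p u, path adj u p -> last u p = rv rj ->
  forall k s, kap (rt rj + path_weight w u p) <= k -> k <= size tr -> At k s -> good rj s u.
Proof.
move=> hr p; elim: p => [|y p IH] u hp hl k s hk hks hA.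
- rewrite /= in hl; subst u.
  case: (issue_index hr) => ij hij hev.
  case: (state_at (ltnW hij)) => s1 hA1.
  case: (state_at hij) => s2 hA2.
  have hst := At_step hij hA1 hA2.
  case e: (nth ev0 tr ij) hst hev => [ev t] hst /= hev; subst ev.
  case: (issue_inv hst) => ht hlk hlr.
  have hlt : ij < kap (rt rj + path_weight w (rv rj) [::]).
    apply: K1 => //; rewrite e /= ht addr0; exact: lexx.
  apply: (good_mono (k := ij.+1) _ hks hA2) => //; first by lia.
  exists rj; split; last exact: reachO_refl.
  by rewrite tl_sink.
- move/andP: hp => [huy hp]; rewrite /= in hl.
  set Ty := (rt rj + path_weight w y p)%R.
  have hwuy := hwpos huy.
  have hTu : (rt rj + path_weight w u (y :: p) = Ty + w u y)%R by rewrite /Ty /=; ring.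
  rewrite hTu in hk.
  have hky : kap Ty <= k by apply: leq_trans (kap_mono _) hk; lra.
  case: (At_exists (kap_size Ty)) => sy [hAy hsuf].
  have gy : good rj sy y := IH y hp hl _ sy (leqnn _) (kap_size Ty) hAy.
  have hI := At_Inv hAy; have hS := iS hI.
  have hyu : adj y u by rewrite hsym.
  case: (sT5 hS hyu) => [hlu|hly|[m hm hse]].
  + apply: (good_mono hky hks hAy hA); case: gy => L [hL hr'].
    exists L; split => //; by rewrite -(tl_link u (sLA hS)) hlu.
  + apply: (good_mono hky hks hAy hA); case: gy => L [hL hr'].
    exists L; split => //; by rewrite -hL -(tl_link y (sLA hS)) hly.
  + case/orP: hse => /andP [/eqP hsm /eqP hrm].
    *
      have hTM := sTM hS hm.
      case/(has_nthP ev0): hTM => i0 hi0 /eqP hi0e.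
      rewrite size_takel ?kap_size // in hi0.
      rewrite nth_take // in hi0e.
      have hstm : (stm m <= Ty)%R by rewrite -hi0e; exact: K3.
      case: (recv_later ev0 hsuf hmsgf hm) => j hj hje.
      rewrite size_drop in hj; rewrite nth_drop in hje.
      have hi : kap Ty + j < size tr by lia.
      case: (state_at (ltnW hi)) => si hAi.
      case: (state_at hi) => si1 hAi1.
      have hst := At_step hi hAi hAi1.
      case e: (nth ev0 tr (kap Ty + j)) hst hje => [ev tau] hst /= hje; subst ev.
      case: (recv_inv hst) => _ htau hlink.
      change (link si1 (rcvr m) = sndr m) in hlink; rewrite hsm hrm in hlink.
      change (is_true (tau <= stm m + w (sndr m) (rcvr m))%R) in htau; rewrite hsm hrm in htau.
      have hlt : kap Ty + j < kap (Ty + w u y).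
        apply: K1 => //; rewrite e /= -(hwsym hyu); apply: le_trans htau _; lra.
      have hkj : kap Ty <= kap Ty + j by lia.
      have gyi1 : good rj si1 y.
        apply: (good_mono _ _ hAy hAi1 gy); lia.
      apply: (good_mono (k := (kap Ty + j).+1) _ hks hAi1 hA); first by lia.
      case: gyi1 => L [hL hr']; exists L; split => //.
      have hLA1 := sLA (iS (At_Inv hAi1)).
      by rewrite -(tl_link u hLA1) hlink.
    *
      apply: (good_mono hky hks hAy hA).
      case: (iF3 hI hm) => L [hL hrL]; rewrite hsm in hL.
      case: gy => Ly [hLy hry].
      exists L; split => //; apply: reachO_trans hrL _; apply: reachO_step hry.
      rewrite /Ef (proj2 (sR1 hS hm)) /mtarget (mtarget_mem_gen (sT4u hS) hm) -hLy hrm.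
      by [].
Qed.

Lemma pw_ge0 u p : path adj u p -> (0 <= path_weight w u p)%R.
Proof.
elim: p u => [|y p IH] u /=; first by [].
move=> /andP [h1 h2]; have := hwpos h1; have := IH _ h2; lra.
Qed.

Lemma d_path u v : exists p, [/\ path adj u p, last u p = v & d u v = path_weight w u p].
Proof.
case: (htree u v) => p [hp _]; exists p; have := htd hp.
by case/and3P: hp => h1 /eqP h2 _; split.
Qed.

Lemma d_self u : d u u = 0%R.
Proof.
have hp : simple_path adj u [::] u by rewrite /simple_path /= eqxx.
by rewrite (htd hp).
Qed.

Lemma d_ge0 u v : (0 <= d u v)%R.
Proof. by case: (d_path u v) => p [hp _ ->]; apply: pw_ge0. Qed.

Lemma reach_le_issue r u : (reach_time d rv rt tr r u <= rt r + d (rv r) u)%R.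
Proof.
rewrite /reach_time; elim: tr => [|e s IH] /=; first exact: lexx.
case: e => [[r'|r' x0 x u0] tau] //.
case: ifP => // _; rewrite ge_min IH; by rewrite orbT.
Qed.

Lemma reach_le_recv r x b sg tau u i : i < size tr -> nth ev0 tr i = (Recv r x b sg, tau) ->
  (reach_time d rv rt tr r u <= tau + d b u)%R.
Proof.
rewrite /reach_time; elim: tr i => [|e s IH] i //= hi.
case: i hi => [|i] hi /=.
  move=> ->; by rewrite eqxx ge_min lexx.
move=> hn; have := IH i hi hn.
case: e => [[r'|r' x0 x1 u0] tau'] //.
case: ifP => // _ h; by rewrite ge_min h orbT.
Qed.

Lemma first_set y X : predq stf y = Some X ->
  exists i, [/\ i < size tr & exists si si1, [/\ At i si, At i.+1 si1,
     predq si1 y = Some X & predq si y <> predq si1 y]].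
Proof.
move=> hf.
suff : forall k s, At k s -> k <= size tr -> predq s y = Some X ->
  exists i, [/\ i < k & exists si si1, [/\ At i si, At i.+1 si1,
     predq si1 y = Some X & predq si y <> predq si1 y]].
  move=> /(_ _ _ At_stf (leqnn _) hf) [i [hi h]]; exists i; split => //.
elim=> [|k IH] s hA hk hp.
  by move: hA; rewrite /At take0 => /run_nil_inv e; rewrite e in hp.
case: (state_at (ltnW hk)) => s1 hA1.
case e: (predq s1 y) => [z|].
  case: (z =P X) => [ez|nz].
    subst; case: (IH _ hA1 (ltnW hk) e) => i [hi h]; exists i; split => //; lia.
  exists k; split => //; exists s1, s; split => //; rewrite e hp => -[]; exact: nz.
exists k; split => //; exists s1, s; split => //; by rewrite e hp.
Qed.

Lemma qj_range j : 0 < j <= n -> 0 < q j <= n.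
Proof.
case: hq => hq0 _ hle hinj /andP [hj1 hj2].
rewrite hle // andbT lt0n; apply/eqP => e.
have := hinj _ _ hj2 (leq0n n); rewrite e hq0 => /(_ erefl); lia.
Qed.

Lemma part1 i j : i < j <= n -> (rt (q i) - rt (q j) <= d (rv (q i)) (rv (q j)))%R.
Proof.
move=> /andP [hij hjn].
have hrj' : 0 < q j <= n by apply: qj_range; lia.
case: i hij => [|i] hij.
  case: hq => hq0 _ _ _; rewrite hq0.
  have -> : rt 0 = 0%R by case: hex => -[].
  have := d_ge0 (rv 0) (rv (q j)).
  have : (0 <= rt (q j))%R by case: hex => _ h _ _ _; apply: h.
  lra.
have hri : 0 < q i.+1 <= n by apply: qj_range; lia.
rewrite leNgt; apply/negP => hlt.
case: (d_path (rv (q i.+1)) (rv (q j))) => p [hp hl hd].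
case: (issue_index hri) => ii hii hev.
case: (state_at (ltnW hii)) => s1 hA1.
case: (state_at hii) => s2 hA2.
have hst := At_step hii hA1 hA2.
have hH := stephyp hii.
case e: (nth ev0 tr ii) hst hH hev => [ev t] hst hH /= hev; subst ev.
case: (issue_inv hst) => ht _ _.
have hk : kap (rt (q j) + path_weight w (rv (q i.+1)) p) <= ii.
  apply: K2 => //; rewrite e /= ht -hd; lra.
case: (KL hrj' hp hl hk (ltnW hii) hA1) => L [hL hr].
have hI := At_Inv hA1.
have hEf := issue_Ef hI hst hH.
case: (step_E hirr htree hI hst hH) => hT _ _.
have hreach : reachO (Ef s2) (q i.+1) (q j).
  apply: reachO_step (hT _ _ hr); by rewrite hEf.
have := reach_mono hii (leqnn _) hA2 At_stf hreach.
move/final_order => /(_ (_ : i.+1 <= n) hjn); lia.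
Qed.

Lemma part2 i j : 0 < i -> i < j <= n ->
  (rt (q i) + Delta d rv rt tr (q i) (rv (q i.-1)) <= rt (q j) + d (rv (q i.-1)) (rv (q j)))%R.
Proof.
move=> hi0 /andP [hij hjn].
have hri : 0 < q i <= n by apply: qj_range; lia.
have hrj : 0 < q j <= n by apply: qj_range; lia.
rewrite /Delta.
suff : (reach_time d rv rt tr (q i) (rv (q i.-1)) <= rt (q j) + d (rv (q i.-1)) (rv (q j)))%R.
  lra.
have hpred : predq stf (q i) = Some (q i.-1).
  case: hq => _ hp _ _; have := hp i.-1 (_ : i.-1 < n); rewrite prednK //; apply; lia.
case: (first_set hpred) => k0 [hk0 [si [si1 [hA hA1 hp1 hne]]]].
have hst := At_step hk0 hA hA1.
have hI := At_Inv hA; have hS := iS hI.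
case: (predq_set hst (fun e => hne (esym e))) => [[he [hlk hpv]]|[x [b [sg [he [hlk hpv]]]]]].
- rewrite hp1 in hpv; case: (sR3 hS (esym hpv)) => hrvX _.
  apply: le_trans (reach_le_issue _ _) _.
  rewrite hrvX d_self addr0.
  have := part1 (_ : i < j <= n); rewrite hij hjn => /(_ isT); lra.
- rewrite hp1 in hpv; case: (sR3 hS (esym hpv)) => hrvX _.
  case e: (nth ev0 tr k0) he hst => [ev tau] /= he hst; subst ev.
  apply: le_trans (reach_le_recv _ hk0 e) _.
  rewrite hrvX d_self addr0.
  rewrite leNgt; apply/negP => hlt.
  case: (d_path b (rv (q j))) => p [hp hl hd].
  have hk : kap (rt (q j) + path_weight w b p) <= k0.
    apply: K2 => //; rewrite e /= -hd; lra.
  case: (KL hrj hp hl hk (ltnW hk0) hA) => L [hL hr].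
  move: hL; rewrite (tl_sink hlk) -hpv => -[eL]; subst L.
  have := reach_mono (ltnW hk0) (leqnn _) hA At_stf hr.
  move/final_order => /(_ (_ : i.-1 <= n) hjn); lia.
Qed.

End Main.

Local Open Scope ring_scope.

Theorem lemma14 (R : realFieldType) (V : finType) (adj : rel V)
    (w d : V -> V -> R) (v0 : V) (link0 : V -> V) (n : nat)
    (rv : nat -> V) (rt : nat -> R) (tr : seq (@event R V * R))
    (stf : @astate R V) (q : nat -> nat) :
  weighted_tree adj w ->
  is_tree_dist adj w d ->
  arrow_execution adj w d v0 link0 n rv rt tr stf ->
  queue_order n stf q ->
  forall i j : nat, (i < j <= n)%N ->
    rt (q i) - rt (q j) <= d (rv (q i)) (rv (q j)) /\
    ((0 < i)%N ->
       rt (q i) + Delta d rv rt tr (q i) (rv (q i.-1))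
         <= rt (q j) + d (rv (q i.-1)) (rv (q j))).
Proof.
move=> hwt htd hex hq i j hij; split; first exact: (part1 hwt htd hex hq hij).
move=> hi; exact: (part2 hwt htd hex hq hi hij).
Qed.
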